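(* Let $G$ be a dicotic nonzugzwang scoring game all of whose terminal positions are numbers. Then $m(G)-\sigma(G)\leq Rs(G)\leq m(G)\leq Ls(G)\leq m(G)+\sigma(G)$.
   Context: A scoring game is $G=\langle G^L\mid G^R\rangle$ with $G^L,G^R$ finite nonempty sets of scoring games or empty sets decorated with a real, $\emptyset^s$; $\langle\emptyset^s\mid\emptyset^s\rangle$ is the number $s$. $Ls(\langle\emptyset^s\mid G^R\rangle)=s$, $Rs(\langle G^L\mid\emptyset^s\rangle)=s$, otherwise $Ls(G)=\max_{G^l\in G^L}Rs(G^l)$, $Rs(G)=\min_{G^r\in G^R}Ls(G^r)$. Disjunctive sum: Left options of $G_1+G_2$ are all $G_1^l+G_2$, $G_1+G_2^l$ (Left side $\emptyset^{\ell_1+\ell_2}$ if neither has Left options), symmetrically for Right; $H+c$ adds the number $c$ to all terminal scores; $nG$ is the sum of $n$ copies. Dicotic: at every position both players have options or neither; nonzugzwang: $Ls(H)\ge Rs(H)$ at every position. Mean: $m(G)=\lim_{n\to\infty}Ls(nG)/n=\lim_{n\to\infty}Rs(nG)/n$ (these exist and agree for dicotic nonzugzwang games). Cooling: if $G$ is a number $k$, $G_t=k$, $\sigma(G)=0$; otherwise $\widetilde G_t=\langle \{G^l_t-t\}\mid \{G^r_t+t\}\rangle$, $t_0=\min\{t\ge0: Ls(\widetilde G_t)=Rs(\widetilde G_t)\}$, $G_t=\widetilde G_t$ for $t\le t_0$ and the number $Ls(\widetilde G_{t_0})$ for $t>t_0$; $\sigma(G)=t_0$ is the temperature. *)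

(* Defs.v *)
From Stdlib Require Import Reals List Relations.
From Coquelicot Require Import Coquelicot.
Import ListNotations.
Open Scope R_scope.

(* The real [l] (resp. [r]) is the decoration of
   the empty Left (resp. Right) set, i.e. the game is <emptyset^l | ...> when
   L = [] ; it is ignored (by every function below) when L <> []. *)
Inductive game : Type :=
  Gm : list game -> R -> list game -> R -> game.

Definition leftopts (g : game) : list game := let 'Gm L _ _ _ := g in L.
Definition rightopts (g : game) : list game := let 'Gm _ _ Rt _ := g in Rt.
Definition leftscore (g : game) : R := let 'Gm _ l _ _ := g in l.
Definition rightscore (g : game) : R := let 'Gm _ _ _ r := g in r.

Definition num (s : R) : game := Gm [] s [] s.

Fixpoint LRs (g : game) : R * R :=
  match g with
  | Gm L l Rt r =>
    (match L with
     | [] => l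
     | x :: xs => fold_right (fun y acc => Rmax (snd (LRs y)) acc) (snd (LRs x)) xs
     end,
     match Rt with
     | [] => r
     | x :: xs => fold_right (fun y acc => Rmin (fst (LRs y)) acc) (fst (LRs x)) xs
     end)
  end.

Definition Ls (g : game) : R := fst (LRs g).
Definition Rs (g : game) : R := snd (LRs g).

Fixpoint gplus (g : game) : game -> game :=
  match g with
  | Gm gL gl gR gr =>
    fix gplus_g (h : game) : game :=
      match h with
      | Gm hL hl hR hr =>
        Gm (map (fun x => gplus x h) gL ++ map gplus_g hL) (gl + hl)
           (map (fun x => gplus x h) gR ++ map gplus_g hR) (gr + hr)
      end
  end.

Fixpoint gtimes (n : nat) (g : game) : game :=
  match n with
  | O => num 0
  | S k => gplus g (gtimes k g)
  end.

Definition is_option (p g : game) : Prop := In p (leftopts g) \/ In p (rightopts g).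
Definition position : game -> game -> Prop := clos_refl_trans game is_option.

Definition dicotic (g : game) : Prop :=
  forall p, position p g -> (leftopts p = [] <-> rightopts p = []).

Definition nonzugzwang (g : game) : Prop :=
  forall p, position p g -> Ls p >= Rs p.

Definition terminals_are_numbers (g : game) : Prop :=
  forall p, position p g -> leftopts p = [] -> rightopts p = [] ->
    leftscore p = rightscore p.

Definition mean (g : game) : R :=
  real (Lim_seq (fun n => Ls (gtimes n g) / INR n)).

(* t0 for a family of games t |-> G~_t : min { t >= 0 | Ls = Rs }
   (taken as an infimum). *)
Definition t0_of (tg : R -> game) : R :=
  real (Glb_Rbar (fun t => 0 <= t /\ Ls (tg t) = Rs (tg t))).

Definition is_numberb (g : game) : bool :=
  match g with
  | Gm [] l [] r => if Req_EM_T l r then true else false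
  | _ => false
  end.

Fixpoint cool (g : game) : R -> game :=
  match g with
  | Gm L l Rt r =>
    let tilde := fun t =>
      Gm (map (fun x => gplus (cool x t) (num (- t))) L) l
         (map (fun x => gplus (cool x t) (num t)) Rt) r in
    if is_numberb g then fun _ => g
    else let t0 := t0_of tilde in
         fun t => if Rle_dec t t0 then tilde t else num (Ls (tilde t0))
  end.

Definition tilde (g : game) (t : R) : game :=
  match g with
  | Gm L l Rt r =>
      Gm (map (fun x => gplus (cool x t) (num (- t))) L) l
         (map (fun x => gplus (cool x t) (num t)) Rt) r
  end.

Definition temperature (g : game) : R :=
  if is_numberb g then 0 else t0_of (tilde g).

(* Main.v *)
From Pilot Require Import Defs.
From Stdlib Require Import Reals List Relations Lra Lia Classical.
From Coquelicot Require Import Coquelicot.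
Import Pilot.Defs.
Import ListNotations.
Open Scope R_scope.

Definition game_ind2 (P : game -> Prop)
  (H : forall L l R r, (forall x, In x L -> P x) -> (forall x, In x R -> P x) -> P (Gm L l R r)) :
  forall g, P g :=
  fix F g := match g with
  | Gm L l R r => H L l R r
     ((fix FL (L0 : list game) : forall x, In x L0 -> P x :=
        match L0 with
        | [] => fun x Hin => False_ind _ Hin
        | y :: ys => fun x Hin => match Hin with
                     | or_introl e => eq_ind y P (F y) x e
                     | or_intror h => FL ys x h end
        end) L)
     ((fix FL (L0 : list game) : forall x, In x L0 -> P x :=
        match L0 with
        | [] => fun x Hin => False_ind _ Hin
        | y :: ys => fun x Hin => match Hin with
                     | or_introl e => eq_ind y P (F y) x e
                     | or_intror h => FL ys x h end
        end) R)
  end.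

Fixpoint gsize (g : game) : nat :=
  match g with
  | Gm L _ R _ => S (fold_right (fun x acc => (gsize x + acc)%nat) 0%nat L +
                     fold_right (fun x acc => (gsize x + acc)%nat) 0%nat R)
  end.

Lemma fold_size_in (x : game) (L : list game) :
  In x L -> (gsize x <= fold_right (fun x acc => (gsize x + acc)%nat) 0%nat L)%nat.
Proof. induction L as [|y L IH]; simpl; [tauto|]. intros [->|H]; [lia|]. specialize (IH H); lia. Qed.

Lemma size_left x g : In x (leftopts g) -> (gsize x < gsize g)%nat.
Proof. destruct g as [L l R r]; simpl. intros H. pose proof (fold_size_in x L H). lia. Qed.
Lemma size_right x g : In x (rightopts g) -> (gsize x < gsize g)%nat.
Proof. destruct g as [L l R r]; simpl. intros H. pose proof (fold_size_in x R H). lia. Qed.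

Lemma size_pos g : (1 <= gsize g)%nat.
Proof. destruct g; simpl; lia. Qed.

Lemma fold_max_ge (f : game -> R) a xs :
  forall y, In y (a :: xs) -> f y <= fold_right (fun y acc => Rmax (f y) acc) (f a) xs.
Proof.
  induction xs as [|b xs IH]; simpl; intros y Hy.
  - destruct Hy as [->|[]]; lra.
  - destruct Hy as [->|[->|Hy]].
    + specialize (IH y (or_introl eq_refl)). eapply Rle_trans; [exact IH|apply Rmax_r].
    + apply Rmax_l.
    + specialize (IH y (or_intror Hy)). eapply Rle_trans; [exact IH|apply Rmax_r].
Qed.

Lemma fold_max_ex (f : game -> R) a xs :
  exists y, In y (a :: xs) /\ fold_right (fun y acc => Rmax (f y) acc) (f a) xs = f y.
Proof.
  induction xs as [|b xs IH]; simpl.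
  - exists a; auto.
  - destruct IH as [y [Hy E]]. rewrite E.
    destruct (Rle_dec (f b) (f y)).
    + exists y. split. simpl in Hy. tauto. rewrite Rmax_right; auto.
    + exists b. split; auto. rewrite Rmax_left; lra.
Qed.

Lemma fold_min_le (f : game -> R) a xs :
  forall y, In y (a :: xs) -> fold_right (fun y acc => Rmin (f y) acc) (f a) xs <= f y.
Proof.
  induction xs as [|b xs IH]; simpl; intros y Hy.
  - destruct Hy as [->|[]]; lra.
  - destruct Hy as [->|[->|Hy]].
    + specialize (IH y (or_introl eq_refl)). eapply Rle_trans; [apply Rmin_r|exact IH].
    + apply Rmin_l.
    + specialize (IH y (or_intror Hy)). eapply Rle_trans; [apply Rmin_r|exact IH].
Qed.

Lemma fold_min_ex (f : game -> R) a xs :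
  exists y, In y (a :: xs) /\ fold_right (fun y acc => Rmin (f y) acc) (f a) xs = f y.
Proof.
  induction xs as [|b xs IH]; simpl.
  - exists a; auto.
  - destruct IH as [y [Hy E]]. rewrite E.
    destruct (Rle_dec (f b) (f y)).
    + exists b. split; auto. rewrite Rmin_left; lra.
    + exists y. split. simpl in Hy. tauto. rewrite Rmin_right; lra.
Qed.

Lemma Ls_ge g x : In x (leftopts g) -> Rs x <= Ls g.
Proof.
  destruct g as [[|a L] l R r]; simpl; [tauto|]. intros H.
  unfold Ls; simpl. exact (fold_max_ge Rs a L x H).
Qed.

Lemma Ls_ex g : leftopts g <> [] -> exists x, In x (leftopts g) /\ Ls g = Rs x.
Proof.
  destruct g as [[|a L] l R r]; simpl; [tauto|]. intros _.
  unfold Ls; simpl. exact (fold_max_ex Rs a L).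
Qed.

Lemma Ls_nil g : leftopts g = [] -> Ls g = leftscore g.
Proof. destruct g as [[|a L] l R r]; simpl; [reflexivity|discriminate]. Qed.

Lemma Rs_le g x : In x (rightopts g) -> Rs g <= Ls x.
Proof.
  destruct g as [L l [|a R] r]; simpl; [tauto|]. intros H.
  unfold Rs; simpl. exact (fold_min_le Ls a R x H).
Qed.

Lemma Rs_ex g : rightopts g <> [] -> exists x, In x (rightopts g) /\ Rs g = Ls x.
Proof.
  destruct g as [L l [|a R] r]; simpl; [tauto|]. intros _.
  unfold Rs; simpl. exact (fold_min_ex Ls a R).
Qed.

Lemma Rs_nil g : rightopts g = [] -> Rs g = rightscore g.
Proof. destruct g as [L l [|a R] r]; simpl; [reflexivity|discriminate]. Qed.

Lemma gplus_eq G H : gplus G H =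
  Gm (map (fun x => gplus x H) (leftopts G) ++ map (gplus G) (leftopts H))
     (leftscore G + leftscore H)
     (map (fun x => gplus x H) (rightopts G) ++ map (gplus G) (rightopts H))
     (rightscore G + rightscore H).
Proof. destruct G, H; reflexivity. Qed.

Lemma in_gplus_left x G H : In x (leftopts (gplus G H)) <->
  (exists g, In g (leftopts G) /\ x = gplus g H) \/ (exists h, In h (leftopts H) /\ x = gplus G h).
Proof.
  rewrite gplus_eq; simpl. rewrite in_app_iff, !in_map_iff.
  split; intros [[y [E I]]|[y [E I]]]; [left|right|left|right]; exists y; auto.
Qed.

Lemma in_gplus_right x G H : In x (rightopts (gplus G H)) <->
  (exists g, In g (rightopts G) /\ x = gplus g H) \/ (exists h, In h (rightopts H) /\ x = gplus G h).
Proof.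
  rewrite gplus_eq; simpl. rewrite in_app_iff, !in_map_iff.
  split; intros [[y [E I]]|[y [E I]]]; [left|right|left|right]; exists y; auto.
Qed.

Lemma gplus_left_nil G H : leftopts (gplus G H) = [] <-> leftopts G = [] /\ leftopts H = [].
Proof.
  rewrite gplus_eq; simpl. split.
  - intros E. apply app_eq_nil in E. destruct E as [A B].
    apply map_eq_nil in A; apply map_eq_nil in B; auto.
  - intros [A B]. rewrite A, B. reflexivity.
Qed.

Lemma gplus_right_nil G H : rightopts (gplus G H) = [] <-> rightopts G = [] /\ rightopts H = [].
Proof.
  rewrite gplus_eq; simpl. split.
  - intros E. apply app_eq_nil in E. destruct E as [A B].
    apply map_eq_nil in A; apply map_eq_nil in B; auto.
  - intros [A B]. rewrite A, B. reflexivity.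
Qed.

Lemma gplus_ls G H : leftscore (gplus G H) = leftscore G + leftscore H.
Proof. destruct G, H; reflexivity. Qed.
Lemma gplus_rs G H : rightscore (gplus G H) = rightscore G + rightscore H.
Proof. destruct G, H; reflexivity. Qed.

Lemma strong_ind_nat (P : nat -> Prop) :
  (forall n, (forall m, (m < n)%nat -> P m) -> P n) -> forall n, P n.
Proof.
  intros H n. assert (forall k m, (m < k)%nat -> P m) as HH.
  { induction k; intros m Hm; [lia|]. apply H. intros p Hp. apply IHk. lia. }
  apply (HH (S n)). lia.
Qed.

Lemma in_nonnil {A} (x : A) l : In x l -> l <> [].
Proof. destruct l; simpl; [tauto|discriminate]. Qed.

Lemma nil_or_in {A} (l : list A) : l = [] \/ exists x, In x l.
Proof. destruct l; [left; auto|right; exists a; simpl; auto]. Qed.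

Lemma Ls_le_intro A v : (leftopts A = [] -> leftscore A <= v) ->
  (forall x, In x (leftopts A) -> Rs x <= v) -> Ls A <= v.
Proof.
  intros H1 H2. destruct (nil_or_in (leftopts A)) as [E|[x Hx]].
  - rewrite Ls_nil; auto.
  - destruct (Ls_ex A (in_nonnil _ _ Hx)) as [y [Hy ->]]. auto.
Qed.

Lemma Ls_ge_intro A v : (leftopts A = [] -> v <= leftscore A) ->
  (leftopts A <> [] -> exists x, In x (leftopts A) /\ v <= Rs x) -> v <= Ls A.
Proof.
  intros H1 H2. destruct (nil_or_in (leftopts A)) as [E|[x Hx]].
  - rewrite Ls_nil; auto.
  - destruct (H2 (in_nonnil _ _ Hx)) as [y [Hy Hv]]. eapply Rle_trans; [exact Hv|]. apply Ls_ge; auto.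
Qed.

Lemma Rs_ge_intro A v : (rightopts A = [] -> v <= rightscore A) ->
  (forall x, In x (rightopts A) -> v <= Ls x) -> v <= Rs A.
Proof.
  intros H1 H2. destruct (nil_or_in (rightopts A)) as [E|[x Hx]].
  - rewrite Rs_nil; auto.
  - destruct (Rs_ex A (in_nonnil _ _ Hx)) as [y [Hy ->]]. auto.
Qed.

Lemma Rs_le_intro A v : (rightopts A = [] -> rightscore A <= v) ->
  (rightopts A <> [] -> exists x, In x (rightopts A) /\ Ls x <= v) -> Rs A <= v.
Proof.
  intros H1 H2. destruct (nil_or_in (rightopts A)) as [E|[x Hx]].
  - rewrite Rs_nil; auto.
  - destruct (H2 (in_nonnil _ _ Hx)) as [y [Hy Hv]]. eapply Rle_trans; [|exact Hv]. apply Rs_le; auto.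
Qed.

Inductive good : game -> Prop :=
| good_intro g :
    (forall x, In x (leftopts g) -> good x) ->
    (forall x, In x (rightopts g) -> good x) ->
    (leftopts g = [] <-> rightopts g = []) ->
    (leftopts g = [] -> rightopts g = [] -> leftscore g = rightscore g) ->
    Rs g <= Ls g -> good g.

Lemma good_l g x : good g -> In x (leftopts g) -> good x.
Proof. intros H; inversion H; auto. Qed.
Lemma good_r g x : good g -> In x (rightopts g) -> good x.
Proof. intros H; inversion H; auto. Qed.
Lemma good_nz g : good g -> Rs g <= Ls g.
Proof. intros H; inversion H; auto. Qed.
Lemma good_dic g : good g -> (leftopts g = [] <-> rightopts g = []).
Proof. intros H; inversion H; auto. Qed.
Lemma good_term g : good g -> leftopts g = [] -> rightopts g = [] -> leftscore g = rightscore g.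
Proof. intros H; inversion H; auto. Qed.

Lemma good_num_l g : good g -> leftopts g = [] -> g = num (leftscore g).
Proof.
  intros Hg HL. pose proof (proj1 (good_dic g Hg) HL) as HR.
  pose proof (good_term g Hg HL HR) as E.
  destruct g as [L l R r]; simpl in *; subst L R. unfold num. rewrite E. reflexivity.
Qed.

Lemma good_num_r g : good g -> rightopts g = [] -> g = num (leftscore g).
Proof. intros Hg HR. apply good_num_l; auto. apply (good_dic g Hg); auto. Qed.

Lemma good_num c : good (num c).
Proof.
  constructor; simpl; try tauto. unfold Ls, Rs; simpl; lra.
Qed.

Lemma hyp_good G : dicotic G -> nonzugzwang G -> terminals_are_numbers G -> good G.
Proof.
  intros Hd Hn Ht.
  assert (forall p, (forall q, position q p -> position q G) -> good p) as K.
  { induction p as [L l R r IHL IHR] using game_ind2. intros Hp.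
    constructor.
    - intros x Hx. apply IHL; auto. intros q Hq. apply Hp.
      eapply rt_trans; [exact Hq|]. apply rt_step. left; exact Hx.
    - intros x Hx. apply IHR; auto. intros q Hq. apply Hp.
      eapply rt_trans; [exact Hq|]. apply rt_step. right; exact Hx.
    - apply Hd. apply Hp. apply rt_refl.
    - apply Ht. apply Hp. apply rt_refl.
    - apply Rge_le. apply Hn. apply Hp. apply rt_refl. }
  apply K. auto.
Qed.

Inductive bis : game -> game -> Prop :=
| bis_intro G H :
   (forall x, In x (leftopts G) -> exists y, In y (leftopts H) /\ bis x y) ->
   (forall y, In y (leftopts H) -> exists x, In x (leftopts G) /\ bis x y) ->
   (forall x, In x (rightopts G) -> exists y, In y (rightopts H) /\ bis x y) ->
   (forall y, In y (rightopts H) -> exists x, In x (rightopts G) /\ bis x y) ->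
   (leftopts G = [] -> leftscore G = leftscore H) ->
   (rightopts G = [] -> rightscore G = rightscore H) -> bis G H.

Lemma bis_LRs_n n : forall G H, (gsize G < n)%nat -> bis G H -> Ls G = Ls H /\ Rs G = Rs H.
Proof.
  induction n; intros G H Hn Hb; [lia|].
  inversion Hb as [G' H' l1 l2 r1 r2 el er]; subst.
  split.
  - destruct (nil_or_in (leftopts G)) as [E|[x Hx]].
    + assert (leftopts H = []) as E2.
      { destruct (nil_or_in (leftopts H)) as [E2|[y Hy]]; auto.
        destruct (l2 y Hy) as [x [Hx _]]. rewrite E in Hx; destruct Hx. }
      rewrite !Ls_nil; auto.
    + apply Rle_antisym.
      * apply Ls_le_intro. intro E; rewrite E in Hx; destruct Hx.
        intros z Hz. destruct (l1 z Hz) as [y [Hy Hzy]].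
        pose proof (size_left z G Hz).
        destruct (IHn z y ltac:(lia) Hzy) as [_ ->]. apply Ls_ge; auto.
      * apply Ls_le_intro.
        { intros E. destruct (l1 x Hx) as [y [Hy _]]. rewrite E in Hy; destruct Hy. }
        intros y Hy. destruct (l2 y Hy) as [z [Hz Hzy]].
        pose proof (size_left z G Hz).
        destruct (IHn z y ltac:(lia) Hzy) as [_ <-]. apply Ls_ge; auto.
  - destruct (nil_or_in (rightopts G)) as [E|[x Hx]].
    + assert (rightopts H = []) as E2.
      { destruct (nil_or_in (rightopts H)) as [E2|[y Hy]]; auto.
        destruct (r2 y Hy) as [x [Hx _]]. rewrite E in Hx; destruct Hx. }
      rewrite !Rs_nil; auto.
    + apply Rle_antisym.
      * apply Rs_ge_intro.
        { intros E. destruct (r1 x Hx) as [y [Hy _]]. rewrite E in Hy; destruct Hy. }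
        intros y Hy. destruct (r2 y Hy) as [z [Hz Hzy]].
        pose proof (size_right z G Hz).
        destruct (IHn z y ltac:(lia) Hzy) as [<- _]. apply Rs_le; auto.
      * apply Rs_ge_intro. intro E; rewrite E in Hx; destruct Hx.
        intros z Hz. destruct (r1 z Hz) as [y [Hy Hzy]].
        pose proof (size_right z G Hz).
        destruct (IHn z y ltac:(lia) Hzy) as [-> _]. apply Rs_le; auto.
Qed.

Lemma bis_Ls G H : bis G H -> Ls G = Ls H.
Proof. intros. apply (bis_LRs_n (S (gsize G)) G H); auto. Qed.
Lemma bis_Rs G H : bis G H -> Rs G = Rs H.
Proof. intros. apply (bis_LRs_n (S (gsize G)) G H); auto. Qed.

Lemma bis_refl G : bis G G.
Proof.
  induction G as [L l R r IHL IHR] using game_ind2.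
  constructor; simpl; intros; eauto.
Qed.

Lemma bis_sym_n n : forall G H, (gsize G + gsize H < n)%nat -> bis G H -> bis H G.
Proof.
  induction n; intros G H Hn Hb; [lia|].
  inversion Hb as [G' H' l1 l2 r1 r2 el er]; subst.
  constructor.
  - intros y Hy. destruct (l2 y Hy) as [x [Hx Hxy]]. exists x; split; auto.
    apply IHn; auto. pose proof (size_left _ _ Hx); pose proof (size_left _ _ Hy); lia.
  - intros x Hx. destruct (l1 x Hx) as [y [Hy Hxy]]. exists y; split; auto.
    apply IHn; auto. pose proof (size_left _ _ Hx); pose proof (size_left _ _ Hy); lia.
  - intros y Hy. destruct (r2 y Hy) as [x [Hx Hxy]]. exists x; split; auto.
    apply IHn; auto. pose proof (size_right _ _ Hx); pose proof (size_right _ _ Hy); lia.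
  - intros x Hx. destruct (r1 x Hx) as [y [Hy Hxy]]. exists y; split; auto.
    apply IHn; auto. pose proof (size_right _ _ Hx); pose proof (size_right _ _ Hy); lia.
  - intros E. assert (leftopts G = []) as E2.
    { destruct (nil_or_in (leftopts G)) as [E2|[y Hy]]; auto.
      destruct (l1 y Hy) as [x [Hx _]]. rewrite E in Hx; destruct Hx. }
    symmetry; auto.
  - intros E. assert (rightopts G = []) as E2.
    { destruct (nil_or_in (rightopts G)) as [E2|[y Hy]]; auto.
      destruct (r1 y Hy) as [x [Hx _]]. rewrite E in Hx; destruct Hx. }
    symmetry; auto.
Qed.

Lemma bis_sym G H : bis G H -> bis H G.
Proof. apply (bis_sym_n (S (gsize G + gsize H))). lia. Qed.

Lemma bis_trans_n n : forall G H K, (gsize G < n)%nat -> bis G H -> bis H K -> bis G K.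
Proof.
  induction n; intros G H K Hn B1 B2; [lia|].
  inversion B1 as [G1 H1 l1 l2 r1 r2 el er]; subst.
  inversion B2 as [G2 H2 l1' l2' r1' r2' el' er']; subst.
  constructor.
  - intros x Hx. destruct (l1 x Hx) as [y [Hy Bxy]]. destruct (l1' y Hy) as [z [Hz Byz]].
    exists z; split; auto. eapply IHn; eauto. pose proof (size_left _ _ Hx); lia.
  - intros z Hz. destruct (l2' z Hz) as [y [Hy Byz]]. destruct (l2 y Hy) as [x [Hx Bxy]].
    exists x; split; auto. eapply IHn; eauto. pose proof (size_left _ _ Hx); lia.
  - intros x Hx. destruct (r1 x Hx) as [y [Hy Bxy]]. destruct (r1' y Hy) as [z [Hz Byz]].
    exists z; split; auto. eapply IHn; eauto. pose proof (size_right _ _ Hx); lia.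
  - intros z Hz. destruct (r2' z Hz) as [y [Hy Byz]]. destruct (r2 y Hy) as [x [Hx Bxy]].
    exists x; split; auto. eapply IHn; eauto. pose proof (size_right _ _ Hx); lia.
  - intros E. assert (leftopts H = []) as E2.
    { destruct (nil_or_in (leftopts H)) as [E2|[y Hy]]; auto.
      destruct (l2 y Hy) as [x [Hx _]]. rewrite E in Hx; destruct Hx. }
    rewrite el, el'; auto.
  - intros E. assert (rightopts H = []) as E2.
    { destruct (nil_or_in (rightopts H)) as [E2|[y Hy]]; auto.
      destruct (r2 y Hy) as [x [Hx _]]. rewrite E in Hx; destruct Hx. }
    rewrite er, er'; auto.
Qed.

Lemma bis_trans G H K : bis G H -> bis H K -> bis G K.
Proof. apply (bis_trans_n (S (gsize G))). lia. Qed.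

Lemma bis_inv G H : bis G H ->
   (forall x, In x (leftopts G) -> exists y, In y (leftopts H) /\ bis x y) /\
   (forall y, In y (leftopts H) -> exists x, In x (leftopts G) /\ bis x y) /\
   (forall x, In x (rightopts G) -> exists y, In y (rightopts H) /\ bis x y) /\
   (forall y, In y (rightopts H) -> exists x, In x (rightopts G) /\ bis x y) /\
   (leftopts G = [] -> leftscore G = leftscore H) /\
   (rightopts G = [] -> rightscore G = rightscore H).
Proof. intros Hb; inversion Hb; subst; tauto. Qed.

Lemma bis_nil_l G H : bis G H -> leftopts G = [] -> leftopts H = [].
Proof.
  intros Hb E. destruct (bis_inv G H Hb) as [_ [l2 _]].
  destruct (nil_or_in (leftopts H)) as [E2|[y Hy]]; auto.
  destruct (l2 y Hy) as [x [Hx _]]. rewrite E in Hx; destruct Hx.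
Qed.
Lemma bis_nil_r G H : bis G H -> rightopts G = [] -> rightopts H = [].
Proof.
  intros Hb E. destruct (bis_inv G H Hb) as [_ [_ [_ [l2 _]]]].
  destruct (nil_or_in (rightopts H)) as [E2|[y Hy]]; auto.
  destruct (l2 y Hy) as [x [Hx _]]. rewrite E in Hx; destruct Hx.
Qed.

Ltac optL := apply in_gplus_left; first [left; eexists; split; [eassumption|reflexivity]
                                        |right; eexists; split; [eassumption|reflexivity]].
Ltac optR := apply in_gplus_right; first [left; eexists; split; [eassumption|reflexivity]
                                         |right; eexists; split; [eassumption|reflexivity]].

Lemma bis_cong_n n : forall G G' H H', (gsize G + gsize H < n)%nat -> bis G G' -> bis H H' ->
  bis (gplus G H) (gplus G' H').
Proof.
  induction n; intros G G' H H' Hn BG BH; [lia|].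
  destruct (bis_inv _ _ BG) as [gl1 [gl2 [gr1 [gr2 [gel ger]]]]].
  destruct (bis_inv _ _ BH) as [hl1 [hl2 [hr1 [hr2 [hel her]]]]].
  constructor.
  - intros x Hx. apply in_gplus_left in Hx. destruct Hx as [[g [Hg ->]]|[h [Hh ->]]].
    + destruct (gl1 g Hg) as [g' [Hg' B]]. exists (gplus g' H'). split; [optL|].
      apply IHn; auto. pose proof (size_left _ _ Hg); lia.
    + destruct (hl1 h Hh) as [h' [Hh' B]]. exists (gplus G' h'). split; [optL|].
      apply IHn; auto. pose proof (size_left _ _ Hh); lia.
  - intros y Hy. apply in_gplus_left in Hy. destruct Hy as [[g' [Hg' ->]]|[h' [Hh' ->]]].
    + destruct (gl2 g' Hg') as [g [Hg B]]. exists (gplus g H). split; [optL|].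
      apply IHn; auto. pose proof (size_left _ _ Hg); lia.
    + destruct (hl2 h' Hh') as [h [Hh B]]. exists (gplus G h). split; [optL|].
      apply IHn; auto. pose proof (size_left _ _ Hh); lia.
  - intros x Hx. apply in_gplus_right in Hx. destruct Hx as [[g [Hg ->]]|[h [Hh ->]]].
    + destruct (gr1 g Hg) as [g' [Hg' B]]. exists (gplus g' H'). split; [optR|].
      apply IHn; auto. pose proof (size_right _ _ Hg); lia.
    + destruct (hr1 h Hh) as [h' [Hh' B]]. exists (gplus G' h'). split; [optR|].
      apply IHn; auto. pose proof (size_right _ _ Hh); lia.
  - intros y Hy. apply in_gplus_right in Hy. destruct Hy as [[g' [Hg' ->]]|[h' [Hh' ->]]].
    + destruct (gr2 g' Hg') as [g [Hg B]]. exists (gplus g H). split; [optR|].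
      apply IHn; auto. pose proof (size_right _ _ Hg); lia.
    + destruct (hr2 h' Hh') as [h [Hh B]]. exists (gplus G h). split; [optR|].
      apply IHn; auto. pose proof (size_right _ _ Hh); lia.
  - intros E. apply gplus_left_nil in E. destruct E. rewrite !gplus_ls, gel, hel; auto.
  - intros E. apply gplus_right_nil in E. destruct E. rewrite !gplus_rs, ger, her; auto.
Qed.

Lemma bis_cong G G' H H' : bis G G' -> bis H H' -> bis (gplus G H) (gplus G' H').
Proof. apply (bis_cong_n (S (gsize G + gsize H))). lia. Qed.

Lemma bis_comm_n n : forall G H, (gsize G + gsize H < n)%nat -> bis (gplus G H) (gplus H G).
Proof.
  induction n; intros G H Hn; [lia|].
  constructor.
  - intros x Hx. apply in_gplus_left in Hx. destruct Hx as [[g [Hg ->]]|[h [Hh ->]]].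
    + exists (gplus H g). split; [optL|]. apply IHn. pose proof (size_left _ _ Hg); lia.
    + exists (gplus h G). split; [optL|]. apply IHn. pose proof (size_left _ _ Hh); lia.
  - intros y Hy. apply in_gplus_left in Hy. destruct Hy as [[h [Hh ->]]|[g [Hg ->]]].
    + exists (gplus G h). split; [optL|]. apply IHn. pose proof (size_left _ _ Hh); lia.
    + exists (gplus g H). split; [optL|]. apply IHn. pose proof (size_left _ _ Hg); lia.
  - intros x Hx. apply in_gplus_right in Hx. destruct Hx as [[g [Hg ->]]|[h [Hh ->]]].
    + exists (gplus H g). split; [optR|]. apply IHn. pose proof (size_right _ _ Hg); lia.
    + exists (gplus h G). split; [optR|]. apply IHn. pose proof (size_right _ _ Hh); lia.
  - intros y Hy. apply in_gplus_right in Hy. destruct Hy as [[h [Hh ->]]|[g [Hg ->]]].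
    + exists (gplus G h). split; [optR|]. apply IHn. pose proof (size_right _ _ Hh); lia.
    + exists (gplus g H). split; [optR|]. apply IHn. pose proof (size_right _ _ Hg); lia.
  - intros _. rewrite !gplus_ls. lra.
  - intros _. rewrite !gplus_rs. lra.
Qed.

Lemma bis_comm G H : bis (gplus G H) (gplus H G).
Proof. apply (bis_comm_n (S (gsize G + gsize H))). lia. Qed.

Lemma bis_assoc_n n : forall G H K, (gsize G + gsize H + gsize K < n)%nat ->
  bis (gplus (gplus G H) K) (gplus G (gplus H K)).
Proof.
  induction n; intros G H K Hn; [lia|].
  constructor.
  - intros x Hx. apply in_gplus_left in Hx. destruct Hx as [[a [Ha ->]]|[k [Hk ->]]].
    + apply in_gplus_left in Ha. destruct Ha as [[g [Hg ->]]|[h [Hh ->]]].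
      * exists (gplus g (gplus H K)). split; [optL|]. apply IHn. pose proof (size_left _ _ Hg); lia.
      * exists (gplus G (gplus h K)). split.
        { apply in_gplus_left. right. exists (gplus h K). split; [optL|reflexivity]. }
        apply IHn. pose proof (size_left _ _ Hh); lia.
    + exists (gplus G (gplus H k)). split.
      { apply in_gplus_left. right. exists (gplus H k). split; [optL|reflexivity]. }
      apply IHn. pose proof (size_left _ _ Hk); lia.
  - intros y Hy. apply in_gplus_left in Hy. destruct Hy as [[g [Hg ->]]|[b [Hb ->]]].
    + exists (gplus (gplus g H) K). split.
      { apply in_gplus_left. left. exists (gplus g H). split; [optL|reflexivity]. }
      apply IHn. pose proof (size_left _ _ Hg); lia.
    + apply in_gplus_left in Hb. destruct Hb as [[h [Hh ->]]|[k [Hk ->]]].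
      * exists (gplus (gplus G h) K). split.
        { apply in_gplus_left. left. exists (gplus G h). split; [optL|reflexivity]. }
        apply IHn. pose proof (size_left _ _ Hh); lia.
      * exists (gplus (gplus G H) k). split; [optL|]. apply IHn. pose proof (size_left _ _ Hk); lia.
  - intros x Hx. apply in_gplus_right in Hx. destruct Hx as [[a [Ha ->]]|[k [Hk ->]]].
    + apply in_gplus_right in Ha. destruct Ha as [[g [Hg ->]]|[h [Hh ->]]].
      * exists (gplus g (gplus H K)). split; [optR|]. apply IHn. pose proof (size_right _ _ Hg); lia.
      * exists (gplus G (gplus h K)). split.
        { apply in_gplus_right. right. exists (gplus h K). split; [optR|reflexivity]. }
        apply IHn. pose proof (size_right _ _ Hh); lia.
    + exists (gplus G (gplus H k)). split.
      { apply in_gplus_right. right. exists (gplus H k). split; [optR|reflexivity]. }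
      apply IHn. pose proof (size_right _ _ Hk); lia.
  - intros y Hy. apply in_gplus_right in Hy. destruct Hy as [[g [Hg ->]]|[b [Hb ->]]].
    + exists (gplus (gplus g H) K). split.
      { apply in_gplus_right. left. exists (gplus g H). split; [optR|reflexivity]. }
      apply IHn. pose proof (size_right _ _ Hg); lia.
    + apply in_gplus_right in Hb. destruct Hb as [[h [Hh ->]]|[k [Hk ->]]].
      * exists (gplus (gplus G h) K). split.
        { apply in_gplus_right. left. exists (gplus G h). split; [optR|reflexivity]. }
        apply IHn. pose proof (size_right _ _ Hh); lia.
      * exists (gplus (gplus G H) k). split; [optR|]. apply IHn. pose proof (size_right _ _ Hk); lia.
  - intros _. rewrite !gplus_ls. lra.
  - intros _. rewrite !gplus_rs. lra.
Qed.

Lemma bis_assoc G H K : bis (gplus (gplus G H) K) (gplus G (gplus H K)).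
Proof. apply (bis_assoc_n (S (gsize G + gsize H + gsize K))). lia. Qed.

Lemma Ls_num c : Ls (num c) = c.
Proof. reflexivity. Qed.
Lemma Rs_num c : Rs (num c) = c.
Proof. reflexivity. Qed.

Lemma shift_LRs X c : Ls (gplus X (num c)) = Ls X + c /\ Rs (gplus X (num c)) = Rs X + c.
Proof.
  induction X as [L l R r IHL IHR] using game_ind2.
  split; apply Rle_antisym.
  - apply Ls_le_intro.
    + intros E. apply gplus_left_nil in E. destruct E as [E _]. simpl in E.
      rewrite gplus_ls. rewrite Ls_nil by exact E. simpl; lra.
    + intros x Hx. apply in_gplus_left in Hx. destruct Hx as [[g [Hg ->]]|[h [Hh _]]]; [|simpl in Hh; contradiction].
      destruct (IHL g Hg) as [_ ->]. pose proof (Ls_ge (Gm L l R r) g Hg). lra.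
  - apply Ls_ge_intro.
    + intros E. apply gplus_left_nil in E. destruct E as [E _]. simpl in E.
      rewrite gplus_ls. rewrite Ls_nil by exact E. simpl; lra.
    + intros Hne. destruct (nil_or_in L) as [E|[g Hg]].
      * exfalso. apply Hne. apply gplus_left_nil. simpl; auto.
      * destruct (Ls_ex (Gm L l R r) (in_nonnil _ _ Hg)) as [g' [Hg' E]].
        exists (gplus g' (num c)). split; [optL|]. destruct (IHL g' Hg') as [_ ->]. rewrite E; lra.
  - apply Rs_le_intro.
    + intros E. apply gplus_right_nil in E. destruct E as [E _]. simpl in E.
      rewrite gplus_rs. rewrite Rs_nil by exact E. simpl; lra.
    + intros Hne. destruct (nil_or_in R) as [E|[g Hg]].
      * exfalso. apply Hne. apply gplus_right_nil. simpl; auto.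
      * destruct (Rs_ex (Gm L l R r) (in_nonnil _ _ Hg)) as [g' [Hg' E]].
        exists (gplus g' (num c)). split; [optR|]. destruct (IHR g' Hg') as [-> _]. rewrite E; lra.
  - apply Rs_ge_intro.
    + intros E. apply gplus_right_nil in E. destruct E as [E _]. simpl in E.
      rewrite gplus_rs. rewrite Rs_nil by exact E. simpl; lra.
    + intros x Hx. apply in_gplus_right in Hx. destruct Hx as [[g [Hg ->]]|[h [Hh _]]]; [|simpl in Hh; contradiction].
      destruct (IHR g Hg) as [-> _]. pose proof (Rs_le (Gm L l R r) g Hg). lra.
Qed.

Lemma Ls_shift X c : Ls (gplus X (num c)) = Ls X + c.
Proof. apply shift_LRs. Qed.
Lemma Rs_shift X c : Rs (gplus X (num c)) = Rs X + c.
Proof. apply shift_LRs. Qed.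
Lemma Ls_shiftl X c : Ls (gplus (num c) X) = Ls X + c.
Proof. rewrite (bis_Ls _ _ (bis_comm _ _)). apply Ls_shift. Qed.
Lemma Rs_shiftl X c : Rs (gplus (num c) X) = Rs X + c.
Proof. rewrite (bis_Rs _ _ (bis_comm _ _)). apply Rs_shift. Qed.

Definition milnor G H :=
  Ls (gplus G H) <= Ls G + Ls H /\
  Rs (gplus G H) <= Ls G + Rs H /\
  Rs (gplus G H) <= Rs G + Ls H /\
  Rs G + Rs H <= Rs (gplus G H) /\
  Ls G + Rs H <= Ls (gplus G H) /\
  Rs G + Ls H <= Ls (gplus G H).

Lemma milnor_n n : forall G H, (gsize G + gsize H < n)%nat -> good G -> good H -> milnor G H.
Proof.
  induction n; intros G H Hn HG HH; [lia|].
  assert (IHl : forall g, In g (leftopts G) -> milnor g H).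
  { intros g Hg. apply IHn; [pose proof (size_left _ _ Hg) as HHs; lia|exact (good_l G g HG Hg)|auto]. }
  assert (IHr : forall g, In g (rightopts G) -> milnor g H).
  { intros g Hg. apply IHn; [pose proof (size_right _ _ Hg) as HHs; lia|exact (good_r G g HG Hg)|auto]. }
  assert (IHl' : forall h, In h (leftopts H) -> milnor G h).
  { intros h Hh. apply IHn; [pose proof (size_left _ _ Hh) as HHs; lia|auto|exact (good_l H h HH Hh)]. }
  assert (IHr' : forall h, In h (rightopts H) -> milnor G h).
  { intros h Hh. apply IHn; [pose proof (size_right _ _ Hh) as HHs; lia|auto|exact (good_r H h HH Hh)]. }
  pose proof (good_nz G HG) as nzG. pose proof (good_nz H HH) as nzH.
  assert (A : Ls (gplus G H) <= Ls G + Ls H).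
  { apply Ls_le_intro.
    - intros E. apply gplus_left_nil in E. destruct E as [E1 E2].
      rewrite gplus_ls, (Ls_nil G E1), (Ls_nil H E2). lra.
    - intros x Hx. apply in_gplus_left in Hx. destruct Hx as [[g [Hg ->]]|[h [Hh ->]]].
      + destruct (IHl g Hg) as [_ [_ [B2 _]]]. pose proof (Ls_ge G g Hg). lra.
      + destruct (IHl' h Hh) as [_ [B1 _]]. pose proof (Ls_ge H h Hh). lra. }
  assert (Cc : Rs G + Rs H <= Rs (gplus G H)).
  { apply Rs_ge_intro.
    - intros E. apply gplus_right_nil in E. destruct E as [E1 E2].
      rewrite gplus_rs, (Rs_nil G E1), (Rs_nil H E2). lra.
    - intros x Hx. apply in_gplus_right in Hx. destruct Hx as [[g [Hg ->]]|[h [Hh ->]]].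
      + destruct (IHr g Hg) as [_ [_ [_ [_ [D1 _]]]]]. pose proof (Rs_le G g Hg). lra.
      + destruct (IHr' h Hh) as [_ [_ [_ [_ [_ D2]]]]]. pose proof (Rs_le H h Hh). lra. }
  unfold milnor. split; [exact A|]. split; [|split; [|split; [exact Cc|split]]].
  -
    destruct (nil_or_in (rightopts H)) as [E|[h0 Hh0]].
    + pose proof (good_num_r H HH E) as EH. rewrite EH. rewrite Rs_shift, Rs_num. lra.
    + destruct (Rs_ex H (in_nonnil _ _ Hh0)) as [h [Hh Eh]].
      pose proof (Rs_le (gplus G H) (gplus G h) ltac:(optR)).
      destruct (IHr' h Hh) as [A' _]. lra.
  -
    destruct (nil_or_in (rightopts G)) as [E|[g0 Hg0]].
    + pose proof (good_num_r G HG E) as EG. rewrite EG. rewrite Rs_shiftl, Rs_num. lra.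
    + destruct (Rs_ex G (in_nonnil _ _ Hg0)) as [g [Hg Eg]].
      pose proof (Rs_le (gplus G H) (gplus g H) ltac:(optR)).
      destruct (IHr g Hg) as [A' _]. lra.
  -
    destruct (nil_or_in (leftopts G)) as [E|[g0 Hg0]].
    + pose proof (good_num_l G HG E) as EG. rewrite EG. rewrite Ls_shiftl, Ls_num. lra.
    + destruct (Ls_ex G (in_nonnil _ _ Hg0)) as [g [Hg Eg]].
      pose proof (Ls_ge (gplus G H) (gplus g H) ltac:(optL)).
      destruct (IHl g Hg) as [_ [_ [_ [C' _]]]]. lra.
  -
    destruct (nil_or_in (leftopts H)) as [E|[h0 Hh0]].
    + pose proof (good_num_l H HH E) as EH. rewrite EH. rewrite Ls_shift, Ls_num. lra.
    + destruct (Ls_ex H (in_nonnil _ _ Hh0)) as [h [Hh Eh]].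
      pose proof (Ls_ge (gplus G H) (gplus G h) ltac:(optL)).
      destruct (IHl' h Hh) as [_ [_ [_ [C' _]]]]. lra.
Qed.

Lemma milnor_ok G H : good G -> good H -> milnor G H.
Proof. apply (milnor_n (S (gsize G + gsize H))). lia. Qed.

Lemma good_gplus_n n : forall G H, (gsize G + gsize H < n)%nat -> good G -> good H -> good (gplus G H).
Proof.
  induction n; intros G H Hn HG HH; [lia|].
  constructor.
  - intros x Hx. apply in_gplus_left in Hx. destruct Hx as [[g [Hg ->]]|[h [Hh ->]]].
    + apply IHn; [pose proof (size_left _ _ Hg) as HHs; lia|exact (good_l G g HG Hg)|auto].
    + apply IHn; [pose proof (size_left _ _ Hh) as HHs; lia|auto|exact (good_l H h HH Hh)].
  - intros x Hx. apply in_gplus_right in Hx. destruct Hx as [[g [Hg ->]]|[h [Hh ->]]].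
    + apply IHn; [pose proof (size_right _ _ Hg) as HHs; lia|exact (good_r G g HG Hg)|auto].
    + apply IHn; [pose proof (size_right _ _ Hh) as HHs; lia|auto|exact (good_r H h HH Hh)].
  - rewrite gplus_left_nil, gplus_right_nil, (good_dic G HG), (good_dic H HH). tauto.
  - intros E1 E2. apply gplus_left_nil in E1. apply gplus_right_nil in E2.
    rewrite gplus_ls, gplus_rs. rewrite (good_term G HG), (good_term H HH); tauto.
  - destruct (milnor_ok G H HG HH) as [_ [B1 [_ [_ [D1 _]]]]]. lra.
Qed.

Lemma good_gplus G H : good G -> good H -> good (gplus G H).
Proof. apply (good_gplus_n (S (gsize G + gsize H))). lia. Qed.

Definition sumg (l : list game) : game := fold_right gplus (num 0) l.
Definition sumR (f : game -> R) (l : list game) : R := fold_right (fun x acc => f x + acc) 0 l.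
Definition tsize (l : list game) : nat := fold_right (fun x acc => (gsize x + acc)%nat) 0%nat l.

Lemma gtimes_sumg n g : gtimes n g = sumg (repeat g n).
Proof. induction n; simpl; [reflexivity|]. rewrite IHn; reflexivity. Qed.

Lemma sumg_cons a l : sumg (a :: l) = gplus a (sumg l).
Proof. reflexivity. Qed.

Lemma in_sumg_left x l : In x (leftopts (sumg l)) <->
  exists l1 a l2 a', l = l1 ++ a :: l2 /\ In a' (leftopts a) /\ x = sumg (l1 ++ a' :: l2).
Proof.
  split.
  - revert x; induction l as [|b l IH]; intros x Hx; [simpl in Hx; contradiction|].
    rewrite sumg_cons in Hx. apply in_gplus_left in Hx.
    destruct Hx as [[g [Hg ->]]|[h [Hh ->]]].
    + exists [], b, l, g. auto.
    + destruct (IH h Hh) as [l1 [a [l2 [a' [E1 [E2 E3]]]]]].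
      exists (b :: l1), a, l2, a'. subst. auto.
  - intros [l1 [a [l2 [a' [E1 [E2 ->]]]]]]. subst l. induction l1 as [|b l1 IH]; simpl.
    + optL.
    + apply in_gplus_left. right. eexists; split; [apply IH|reflexivity].
Qed.

Lemma in_sumg_right x l : In x (rightopts (sumg l)) <->
  exists l1 a l2 a', l = l1 ++ a :: l2 /\ In a' (rightopts a) /\ x = sumg (l1 ++ a' :: l2).
Proof.
  split.
  - revert x; induction l as [|b l IH]; intros x Hx; [simpl in Hx; contradiction|].
    rewrite sumg_cons in Hx. apply in_gplus_right in Hx.
    destruct Hx as [[g [Hg ->]]|[h [Hh ->]]].
    + exists [], b, l, g. auto.
    + destruct (IH h Hh) as [l1 [a [l2 [a' [E1 [E2 E3]]]]]].
      exists (b :: l1), a, l2, a'. subst. auto.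
  - intros [l1 [a [l2 [a' [E1 [E2 ->]]]]]]. subst l. induction l1 as [|b l1 IH]; simpl.
    + optR.
    + apply in_gplus_right. right. eexists; split; [apply IH|reflexivity].
Qed.

Lemma sumg_left_opt l1 a l2 a' : In a' (leftopts a) -> In (sumg (l1 ++ a' :: l2)) (leftopts (sumg (l1 ++ a :: l2))).
Proof. intros H. apply in_sumg_left. exists l1, a, l2, a'. auto. Qed.
Lemma sumg_right_opt l1 a l2 a' : In a' (rightopts a) -> In (sumg (l1 ++ a' :: l2)) (rightopts (sumg (l1 ++ a :: l2))).
Proof. intros H. apply in_sumg_right. exists l1, a, l2, a'. auto. Qed.

Lemma sumg_left_nil l : leftopts (sumg l) = [] <-> forall a, In a l -> leftopts a = [].
Proof.
  induction l as [|b l IH]; simpl.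
  - split; [tauto|reflexivity].
  - rewrite gplus_left_nil, IH. split.
    + intros [H1 H2] a [->|Ha]; auto.
    + intros H; split; auto.
Qed.
Lemma sumg_right_nil l : rightopts (sumg l) = [] <-> forall a, In a l -> rightopts a = [].
Proof.
  induction l as [|b l IH]; simpl.
  - split; [tauto|reflexivity].
  - rewrite gplus_right_nil, IH. split.
    + intros [H1 H2] a [->|Ha]; auto.
    + intros H; split; auto.
Qed.

Lemma sumg_ls l : leftscore (sumg l) = sumR leftscore l.
Proof. induction l; simpl; [reflexivity|]. rewrite gplus_ls, IHl. reflexivity. Qed.
Lemma sumg_rs l : rightscore (sumg l) = sumR rightscore l.
Proof. induction l; simpl; [reflexivity|]. rewrite gplus_rs, IHl. reflexivity. Qed.

Lemma sumR_app f l1 a l2 : sumR f (l1 ++ a :: l2) = f a + sumR f (l1 ++ l2).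
Proof. induction l1; simpl; [reflexivity|]. unfold sumR in *. simpl. rewrite IHl1. lra. Qed.

Lemma sumR_ext f g l : (forall a, In a l -> f a = g a) -> sumR f l = sumR g l.
Proof. induction l; simpl; intros H; [reflexivity|]. unfold sumR in *; simpl. rewrite H, IHl; auto. Qed.

Lemma sumR_le f g l : (forall a, In a l -> f a <= g a) -> sumR f l <= sumR g l.
Proof. induction l; simpl; intros H; [unfold sumR; simpl; lra|]. unfold sumR in *; simpl.
  pose proof (H a (or_introl eq_refl)). pose proof (IHl (fun b Hb => H b (or_intror Hb))). lra. Qed.

Lemma sumR_map f h l : sumR f (map h l) = sumR (fun x => f (h x)) l.
Proof. induction l; simpl; [reflexivity|]. unfold sumR in *; simpl. rewrite IHl. reflexivity. Qed.

Lemma tsize_app l1 a l2 : tsize (l1 ++ a :: l2) = (gsize a + tsize (l1 ++ l2))%nat.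
Proof. induction l1; simpl; [reflexivity|]. unfold tsize in *; simpl. rewrite IHl1. lia. Qed.

Lemma bis_extract l1 a l2 : bis (sumg (l1 ++ a :: l2)) (gplus a (sumg (l1 ++ l2))).
Proof.
  induction l1 as [|b l1 IH]; simpl; [apply bis_refl|].
  eapply bis_trans; [apply bis_cong; [apply bis_refl|exact IH]|].
  eapply bis_trans; [apply bis_sym, bis_assoc|].
  eapply bis_trans; [apply bis_cong; [apply bis_comm|apply bis_refl]|].
  apply bis_assoc.
Qed.

Lemma Ls_extract l1 a l2 : Ls (sumg (l1 ++ a :: l2)) = Ls (gplus a (sumg (l1 ++ l2))).
Proof. apply bis_Ls, bis_extract. Qed.
Lemma Rs_extract l1 a l2 : Rs (sumg (l1 ++ a :: l2)) = Rs (gplus a (sumg (l1 ++ l2))).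
Proof. apply bis_Rs, bis_extract. Qed.

Lemma bis_shift_mid w c S : bis (gplus (gplus w (num c)) S) (gplus (gplus w S) (num c)).
Proof.
  eapply bis_trans; [apply bis_assoc|].
  eapply bis_trans; [apply bis_cong; [apply bis_refl|apply bis_comm]|].
  apply bis_sym, bis_assoc.
Qed.

Lemma Ls_sum_shift l1 w c l2 : Ls (sumg (l1 ++ gplus w (num c) :: l2)) = Ls (sumg (l1 ++ w :: l2)) + c.
Proof.
  rewrite Ls_extract, (bis_Ls _ _ (bis_shift_mid _ _ _)), Ls_shift, Ls_extract. reflexivity.
Qed.
Lemma Rs_sum_shift l1 w c l2 : Rs (sumg (l1 ++ gplus w (num c) :: l2)) = Rs (sumg (l1 ++ w :: l2)) + c.
Proof.
  rewrite Rs_extract, (bis_Rs _ _ (bis_shift_mid _ _ _)), Rs_shift, Rs_extract. reflexivity.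
Qed.

Lemma good_sumg l : (forall a, In a l -> good a) -> good (sumg l).
Proof.
  induction l as [|b l IH]; simpl; intros H; [apply good_num|].
  apply good_gplus; auto.
Qed.

Lemma Ls_sumg_le l : (forall a, In a l -> good a) -> Ls (sumg l) <= sumR Ls l.
Proof.
  induction l as [|b l IH]; simpl; intros H; [unfold sumR; simpl; rewrite Ls_num; lra|].
  unfold sumR in *; simpl.
  destruct (milnor_ok b (sumg l) (H b (or_introl eq_refl)) (good_sumg l (fun a Ha => H a (or_intror Ha)))) as [A' _].
  pose proof (IH (fun a Ha => H a (or_intror Ha))). lra.
Qed.

Lemma Rs_sumg_ge l : (forall a, In a l -> good a) -> sumR Rs l <= Rs (sumg l).
Proof.
  induction l as [|b l IH]; simpl; intros H; [unfold sumR; simpl; rewrite Rs_num; lra|].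
  unfold sumR in *; simpl.
  destruct (milnor_ok b (sumg l) (H b (or_introl eq_refl)) (good_sumg l (fun a Ha => H a (or_intror Ha)))) as [_ [_ [_ [C' _]]]].
  pose proof (IH (fun a Ha => H a (or_intror Ha))). lra.
Qed.

Lemma map_decomp {X Y} (f : X -> Y) l m1 b m2 : map f l = m1 ++ b :: m2 ->
  exists l1 a l2, l = l1 ++ a :: l2 /\ map f l1 = m1 /\ f a = b /\ map f l2 = m2.
Proof.
  intros E. apply map_eq_app in E. destruct E as [l1 [l' [E1 [E2 E3]]]].
  apply map_eq_cons in E3. destruct E3 as [a [l2 [E4 [E5 E6]]]]. subst.
  exists l1, a, l2. auto.
Qed.

Lemma in_mid {X} (a : X) l1 l2 : In a (l1 ++ a :: l2).
Proof. apply in_or_app. right; left; auto. Qed.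

Lemma in_mid_other {X} (b : X) l1 a l2 : In b (l1 ++ l2) -> In b (l1 ++ a :: l2).
Proof. rewrite !in_app_iff. simpl. tauto. Qed.

Lemma argmax (p : game -> bool) (f : game -> R) l : (exists a, In a l /\ p a = true) ->
  exists l1 a l2, l = l1 ++ a :: l2 /\ p a = true /\ forall b, In b l -> p b = true -> f b <= f a.
Proof.
  induction l as [|c l IH]; intros [a0 [Ha0 Hp0]]; [destruct Ha0|].
  destruct (p c) eqn:Hc.
  - destruct (classic (exists a, In a l /\ p a = true)) as [Ex|NEx].
    + destruct (IH Ex) as [l1 [a [l2 [E [Hpa Hmax]]]]].
      destruct (Rle_dec (f c) (f a)).
      * exists (c :: l1), a, l2. split; [simpl; congruence|]. split; auto.
        intros b [->|Hb] Hpb; auto.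
      * exists [], c, l. split; [reflexivity|]. split; auto.
        intros b [->|Hb] Hpb; [lra|]. specialize (Hmax b Hb Hpb). lra.
    + exists [], c, l. split; [reflexivity|]. split; auto.
      intros b [->|Hb] Hpb; [lra|]. exfalso; apply NEx; eauto.
  - destruct Ha0 as [->|Ha0]; [congruence|].
    destruct (IH (ex_intro _ a0 (conj Ha0 Hp0))) as [l1 [a [l2 [E [Hpa Hmax]]]]].
    exists (c :: l1), a, l2. split; [simpl; congruence|]. split; auto.
    intros b [->|Hb] Hpb; [congruence|]. auto.
Qed.

Lemma cool_eq g t : cool g t = if is_numberb g then g else
   (if Rle_dec t (temperature g) then tilde g t else num (Ls (tilde g (temperature g)))).
Proof.
  destruct g as [L l R r]. unfold temperature. cbn [cool].
  destruct (is_numberb (Gm L l R r)); reflexivity.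
Qed.

Lemma lipschitz_cont (h : R -> R) K : 0 < K -> (forall x y, Rabs (h x - h y) <= K * Rabs (x - y)) -> continuity h.
Proof.
  intros HK Hl x. unfold continuity_pt, continue_in, limit1_in, limit_in. intros eps Heps.
  exists (eps / K). split. { apply Rdiv_lt_0_compat; lra. }
  intros y [_ Hy]. simpl in *. unfold R_dist in *.
  specialize (Hl y x).
  assert (K * Rabs (y - x) < K * (eps / K)) by (apply Rmult_lt_compat_l; lra).
  replace (K * (eps / K)) with eps in H by (field; lra). lra.
Qed.

Lemma rmax_lip x y : Rabs (Rmax 0 x - Rmax 0 y) <= Rabs (x - y).
Proof. unfold Rmax; destruct (Rle_dec 0 x), (Rle_dec 0 y); unfold Rabs; repeat destruct Rcase_abs; lra. Qed.

Lemma crossing (A B : R -> R) :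
  (forall s t, 0 <= s -> s <= t -> A t - B t <= A s - B s) ->
  (forall s t, 0 <= s -> s <= t -> (A s - B s) - (A t - B t) <= 2 * (t - s)) ->
  0 <= A 0 - B 0 ->
  (exists T, 0 <= T /\ A T - B T < 0) ->
  let sg := real (Glb_Rbar (fun t => 0 <= t /\ A t = B t)) in
  0 <= sg /\ A sg = B sg /\ (forall t, 0 <= t -> t <= sg -> B t <= A t).
Proof.
  intros Hmono Hlip H0 [T [HT0 HT]] sg.
  set (f := fun t => A t - B t).
  assert (exists z, 0 <= z /\ A z = B z) as [z [Hz0 Hz]].
  { destruct (Req_dec (A 0 - B 0) 0) as [E|NE].
    - exists 0. split; [lra|lra].
    - set (h := fun x => - f (Rmax 0 x)).
      assert (Hc : continuity h).
      { apply (lipschitz_cont h 2); [lra|]. intros x y. unfold h, f.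
        assert (forall a b, 0 <= a -> 0 <= b -> Rabs ((A a - B a) - (A b - B b)) <= 2 * Rabs (a - b)) as L.
        { intros a b Ha Hb. destruct (Rle_dec a b).
          - pose proof (Hmono a b Ha r). pose proof (Hlip a b Ha r).
            rewrite (Rabs_pos_eq ((A a - B a) - (A b - B b))) by lra.
            rewrite (Rabs_left1 (a - b)) by lra. lra.
          - pose proof (Hmono b a Hb ltac:(lra)). pose proof (Hlip b a Hb ltac:(lra)).
            rewrite (Rabs_left1 ((A a - B a) - (A b - B b))) by lra.
            rewrite (Rabs_pos_eq (a - b)) by lra. lra. }
        replace (- (A (Rmax 0 x) - B (Rmax 0 x)) - - (A (Rmax 0 y) - B (Rmax 0 y)))
          with (-((A (Rmax 0 x) - B (Rmax 0 x)) - (A (Rmax 0 y) - B (Rmax 0 y)))) by ring.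
        rewrite Rabs_Ropp.
        eapply Rle_trans; [apply L; apply Rmax_l|].
        apply Rmult_le_compat_l; [lra|].
        apply rmax_lip. }
      assert (0 < T).
      { destruct (Rle_dec T 0); [|lra]. assert (T = 0) by lra. subst T. lra. }
      destruct (IVT h 0 T Hc H) as [z [[Hz1 Hz2] Hz]].
      + unfold h, f. rewrite Rmax_left by lra. lra.
      + unfold h, f. rewrite Rmax_right by lra. lra.
      + exists z. split; [lra|]. unfold h, f in Hz. rewrite Rmax_right in Hz by lra. lra. }
  set (E := fun t => 0 <= t /\ A t = B t).
  pose proof (Glb_Rbar_correct E) as [Hlb Hgr].
  assert (Hb1 : Rbar_le (Glb_Rbar E) z) by (apply Hlb; split; auto).
  assert (Hb2 : Rbar_le 0 (Glb_Rbar E)) by (apply Hgr; intros x [Hx _]; simpl; exact Hx).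
  fold E in sg.
  destruct (Glb_Rbar E) as [s| |] eqn:Eg; simpl in Hb1, Hb2; try contradiction.
  simpl in sg. subst sg.
  assert (Hfs : A s = B s).
  { destruct (Rtotal_order (A s - B s) 0) as [Hlt|[Heq|Hgt]].
    - pose proof (Hmono s z Hb2 Hb1). lra.
    - lra.
    - exfalso. set (d := (A s - B s) / 4).
      assert (~ is_lb_Rbar E (Finite (s + d))) as NL.
      { intros HL. specialize (Hgr _ HL). simpl in Hgr. unfold d in Hgr. lra. }
      apply NL. intros e He. simpl.
      destruct (Rle_dec (s + d) e) as [|Hn]; [auto|exfalso].
      destruct He as [He0 He].
      pose proof (Hlb e (conj He0 He)) as Hse. simpl in Hse.
      pose proof (Hlip s e Hb2 Hse). unfold d in Hn. lra. }
  split; [exact Hb2|]. split; [exact Hfs|].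
  intros t Ht0 Hts. pose proof (Hmono t s Ht0 Hts). lra.
Qed.

Lemma tilde_L Y t : leftopts (tilde Y t) = map (fun x => gplus (cool x t) (num (-t))) (leftopts Y).
Proof. destruct Y; reflexivity. Qed.
Lemma tilde_R Y t : rightopts (tilde Y t) = map (fun x => gplus (cool x t) (num t)) (rightopts Y).
Proof. destruct Y; reflexivity. Qed.

Lemma tilde_Ls_ge Y t x : In x (leftopts Y) -> Rs (cool x t) - t <= Ls (tilde Y t).
Proof.
  intros Hx. pose proof (Ls_ge (tilde Y t) (gplus (cool x t) (num (-t)))) as H.
  rewrite Rs_shift in H. rewrite tilde_L in H. specialize (H (in_map _ _ _ Hx)). lra.
Qed.
Lemma tilde_Ls_ex Y t : leftopts Y <> [] -> exists x, In x (leftopts Y) /\ Ls (tilde Y t) = Rs (cool x t) - t.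
Proof.
  intros Hne. destruct (Ls_ex (tilde Y t)) as [y [Hy E]].
  { rewrite tilde_L. intros E; apply map_eq_nil in E; auto. }
  rewrite tilde_L in Hy. apply in_map_iff in Hy. destruct Hy as [x [<- Hx]].
  exists x. split; auto. rewrite E, Rs_shift. lra.
Qed.
Lemma tilde_Rs_le Y t x : In x (rightopts Y) -> Rs (tilde Y t) <= Ls (cool x t) + t.
Proof.
  intros Hx. pose proof (Rs_le (tilde Y t) (gplus (cool x t) (num t))) as H.
  rewrite Ls_shift in H. rewrite tilde_R in H. specialize (H (in_map _ _ _ Hx)). lra.
Qed.
Lemma tilde_Rs_ex Y t : rightopts Y <> [] -> exists x, In x (rightopts Y) /\ Rs (tilde Y t) = Ls (cool x t) + t.
Proof.
  intros Hne. destruct (Rs_ex (tilde Y t)) as [y [Hy E]].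
  { rewrite tilde_R. intros E; apply map_eq_nil in E; auto. }
  rewrite tilde_R in Hy. apply in_map_iff in Hy. destruct Hy as [x [<- Hx]].
  exists x. split; auto. rewrite E, Ls_shift. lra.
Qed.

Definition mono (Y : game) := forall s t, 0 <= s -> s <= t ->
  Ls (cool Y t) <= Ls (cool Y s) /\ Ls (cool Y s) + s <= Ls (cool Y t) + t /\
  Rs (cool Y s) <= Rs (cool Y t) /\ Rs (cool Y t) - t <= Rs (cool Y s) - s.

Lemma tilde_mono Y : leftopts Y <> [] -> rightopts Y <> [] ->
  (forall x, In x (leftopts Y) -> mono x) -> (forall x, In x (rightopts Y) -> mono x) ->
  forall s t, 0 <= s -> s <= t ->
  Ls (tilde Y t) <= Ls (tilde Y s) /\ Ls (tilde Y s) + s <= Ls (tilde Y t) + t /\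
  Rs (tilde Y s) <= Rs (tilde Y t) /\ Rs (tilde Y t) - t <= Rs (tilde Y s) - s.
Proof.
  intros HL HR ML MR s t Hs Hst. split; [|split; [|split]].
  - destruct (tilde_Ls_ex Y t HL) as [x [Hx E]]. rewrite E.
    destruct (ML x Hx s t Hs Hst) as [_ [_ [_ M4]]]. pose proof (tilde_Ls_ge Y s x Hx). lra.
  - destruct (tilde_Ls_ex Y s HL) as [x [Hx E]]. rewrite E.
    destruct (ML x Hx s t Hs Hst) as [_ [_ [M3 _]]]. pose proof (tilde_Ls_ge Y t x Hx). lra.
  - destruct (tilde_Rs_ex Y t HR) as [x [Hx E]]. rewrite E.
    destruct (MR x Hx s t Hs Hst) as [_ [M2 _]]. pose proof (tilde_Rs_le Y s x Hx). lra.
  - destruct (tilde_Rs_ex Y s HR) as [x [Hx E]]. rewrite E.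
    destruct (MR x Hx s t Hs Hst) as [M1 _]. pose proof (tilde_Rs_le Y t x Hx). lra.
Qed.

Definition CP (Y : game) :=
  (forall t, 0 <= t -> good (cool Y t)) /\ mono Y /\
  Ls (cool Y 0) = Ls Y /\ Rs (cool Y 0) = Rs Y /\ 0 <= temperature Y /\
  (is_numberb Y = false ->
     Ls (tilde Y (temperature Y)) = Rs (tilde Y (temperature Y)) /\
     (forall t, temperature Y <= t -> Ls (tilde Y t) <= Ls (tilde Y (temperature Y)) /\
                                      Rs (tilde Y (temperature Y)) <= Rs (tilde Y t))).

Lemma sumR_abs_ge (f : game -> R) l x : In x l -> f x <= sumR (fun y => Rabs (f y)) l.
Proof.
  induction l as [|a l IH]; simpl; [tauto|]. unfold sumR in *; simpl.
  assert (0 <= fold_right (fun x0 acc => Rabs (f x0) + acc) 0 l).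
  { clear. induction l; simpl; [lra|]. pose proof (Rabs_pos (f a)). lra. }
  intros [->|Hx].
  - pose proof (Rle_abs (f x)). lra.
  - pose proof (IH Hx). pose proof (Rabs_pos (f a)). lra.
Qed.

Lemma nonnum_opts Y : good Y -> is_numberb Y = false -> leftopts Y <> [] /\ rightopts Y <> [].
Proof.
  intros HG Hn. destruct (nil_or_in (leftopts Y)) as [E|[x Hx]].
  - exfalso. pose proof (proj1 (good_dic Y HG) E) as E2. pose proof (good_term Y HG E E2) as E3.
    destruct Y as [L l R r]; simpl in *; subst L R.
    simpl in Hn. destruct (Req_EM_T l r); congruence.
  - split; [exact (in_nonnil _ _ Hx)|]. intros E. apply (good_dic Y HG) in E. rewrite E in Hx; destruct Hx.
Qed.

Lemma temp_num Y : is_numberb Y = true -> temperature Y = 0.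
Proof. intros H. unfold temperature. rewrite H. reflexivity. Qed.

Lemma temp_nonnum Y : is_numberb Y = false ->
  temperature Y = real (Glb_Rbar (fun t => 0 <= t /\ Ls (tilde Y t) = Rs (tilde Y t))).
Proof. intros H. unfold temperature. rewrite H. reflexivity. Qed.

Lemma cool_num Y t : is_numberb Y = true -> cool Y t = Y.
Proof. intros H. rewrite cool_eq, H. reflexivity. Qed.

Lemma cool_nonnum Y t : is_numberb Y = false ->
  cool Y t = if Rle_dec t (temperature Y) then tilde Y t else num (Ls (tilde Y (temperature Y))).
Proof. intros H. rewrite cool_eq, H. reflexivity. Qed.

Lemma cool_props Y : good Y -> CP Y.
Proof.
  induction Y as [L l R r IHL IHR] using game_ind2. intros HG.
  set (Y := Gm L l R r) in *.
  assert (IHL' : forall x, In x L -> CP x) by (intros x Hx; apply IHL; auto; exact (good_l Y x HG Hx)).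
  assert (IHR' : forall x, In x R -> CP x) by (intros x Hx; apply IHR; auto; exact (good_r Y x HG Hx)).
  clear IHL IHR.
  destruct (is_numberb Y) eqn:Hn.
  -
    unfold CP. rewrite (temp_num Y Hn).
    split; [intros t Ht; rewrite (cool_num Y t Hn); exact HG|]. split.
    { intros s t Hs Hst. rewrite !(cool_num Y _ Hn). lra. }
    rewrite (cool_num Y 0 Hn). split; [reflexivity|]. split; [reflexivity|]. split; [lra|]. congruence.
  - destruct (nonnum_opts Y HG Hn) as [HLne HRne]. simpl in HLne, HRne.
    assert (ML : forall x, In x (leftopts Y) -> mono x) by (intros x Hx; apply (IHL' x Hx)).
    assert (MR : forall x, In x (rightopts Y) -> mono x) by (intros x Hx; apply (IHR' x Hx)).
    pose proof (tilde_mono Y HLne HRne ML MR) as TM.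
    assert (A0 : Ls (tilde Y 0) = Ls Y).
    { apply Rle_antisym.
      - destruct (tilde_Ls_ex Y 0 HLne) as [x [Hx E]]. rewrite E.
        destruct (IHL' x Hx) as [_ [_ [_ [E2 _]]]]. rewrite E2. pose proof (Ls_ge Y x Hx). lra.
      - destruct (Ls_ex Y HLne) as [x [Hx E]]. rewrite E.
        destruct (IHL' x Hx) as [_ [_ [_ [E2 _]]]]. pose proof (tilde_Ls_ge Y 0 x Hx). rewrite E2 in H. lra. }
    assert (B0 : Rs (tilde Y 0) = Rs Y).
    { apply Rle_antisym.
      - destruct (Rs_ex Y HRne) as [x [Hx E]]. rewrite E.
        destruct (IHR' x Hx) as [_ [_ [E2 _]]]. pose proof (tilde_Rs_le Y 0 x Hx). rewrite E2 in H. lra.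
      - destruct (tilde_Rs_ex Y 0 HRne) as [x [Hx E]]. rewrite E.
        destruct (IHR' x Hx) as [_ [_ [E2 _]]]. rewrite E2. pose proof (Rs_le Y x Hx). lra. }
    assert (Hcr := crossing (fun t => Ls (tilde Y t)) (fun t => Rs (tilde Y t))).
    cbv beta in Hcr. rewrite <- (temp_nonnum Y Hn) in Hcr.
    destruct Hcr as [Hs0 [Hsv Hbefore]].
    + intros s t Hs Hst. destruct (TM s t Hs Hst) as [M1 [_ [M3 _]]]. lra.
    + intros s t Hs Hst. destruct (TM s t Hs Hst) as [_ [M2 [_ M4]]]. lra.
    + rewrite A0, B0. pose proof (good_nz Y HG). lra.
    + set (BL := sumR (fun y => Rabs (Ls (cool y 0))) L).
      set (BR := sumR (fun y => Rabs (- Rs (cool y 0))) R).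
      assert (0 <= BL).
      { unfold BL, sumR. clear. induction L; simpl; [lra|]. pose proof (Rabs_pos (Ls (cool a 0))). lra. }
      assert (0 <= BR).
      { unfold BR, sumR. clear. induction R; simpl; [lra|]. pose proof (Rabs_pos (- Rs (cool a 0))). lra. }
      exists (BL + BR + 1). split; [lra|].
      set (T := BL + BR + 1).
      destruct (tilde_Ls_ex Y T HLne) as [x [Hx Ex]]. destruct (tilde_Rs_ex Y T HRne) as [y [Hy Ey]].
      rewrite Ex, Ey.
      destruct (IHL' x Hx) as [Gx [Mx _]]. destruct (IHR' y Hy) as [Gy [My _]].
      pose proof (good_nz _ (Gx T ltac:(unfold T; lra))).
      pose proof (good_nz _ (Gy T ltac:(unfold T; lra))).
      destruct (Mx 0 T ltac:(lra) ltac:(unfold T; lra)) as [Mx1 _].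
      destruct (My 0 T ltac:(lra) ltac:(unfold T; lra)) as [_ [_ [My3 _]]].
      pose proof (sumR_abs_ge (fun y => Ls (cool y 0)) L x Hx). fold BL in H3.
      pose proof (sumR_abs_ge (fun y => - Rs (cool y 0)) R y Hy). fold BR in H4.
      simpl in H3, H4. unfold T, BL, BR in *. lra.
    + set (sg := temperature Y) in *.
      assert (CE : forall t, cool Y t = if Rle_dec t sg then tilde Y t else num (Ls (tilde Y sg)))
        by (intros; apply cool_nonnum; auto).
      unfold CP. fold sg. split; [|split; [|split; [|split; [|split]]]].
      *
        intros t Ht. rewrite CE. destruct (Rle_dec t sg) as [Hts|Hts]; [|apply good_num].
        constructor.
        -- intros z Hz. rewrite tilde_L in Hz. apply in_map_iff in Hz. destruct Hz as [x [<- Hx]].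
           apply good_gplus; [|apply good_num]. apply (IHL' x Hx); auto.
        -- intros z Hz. rewrite tilde_R in Hz. apply in_map_iff in Hz. destruct Hz as [x [<- Hx]].
           apply good_gplus; [|apply good_num]. apply (IHR' x Hx); auto.
        -- rewrite tilde_L, tilde_R. split; intros E; apply map_eq_nil in E; simpl in E; contradiction.
        -- rewrite tilde_L. intros E; apply map_eq_nil in E; simpl in E; contradiction.
        -- apply Hbefore; auto.
      *
        intros s t Hs Hst. rewrite !CE.
        destruct (Rle_dec t sg) as [Ht|Ht]; destruct (Rle_dec s sg) as [Hs'|Hs'].
        -- apply TM; auto.
        -- lra.
        -- rewrite Ls_num, Rs_num.
           destruct (TM s sg Hs Hs') as [M1 [M2 [M3 M4]]]. lra.
        -- rewrite !Ls_num, !Rs_num. lra.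
      * rewrite CE. destruct (Rle_dec 0 sg); [|lra]. exact A0.
      * rewrite CE. destruct (Rle_dec 0 sg); [|lra]. exact B0.
      * exact Hs0.
      * intros _. split; [exact Hsv|]. intros t Ht.
        destruct (TM sg t Hs0 Ht) as [M1 [M2 [M3 M4]]]. lra.
Qed.

Definition val (Y : game) : R := Ls (cool Y (temperature Y)).

Lemma num_form Y : is_numberb Y = true -> Y = num (Ls Y).
Proof.
  destruct Y as [[|a L] l [|b R] r]; simpl; try discriminate.
  destruct (Req_EM_T l r); [|discriminate]. intros _. subst. reflexivity.
Qed.

Lemma num_opts Y : is_numberb Y = true -> leftopts Y = [] /\ rightopts Y = [].
Proof. intros H. rewrite (num_form Y H). simpl. auto. Qed.

Lemma good_isnum Y : good Y -> leftopts Y = [] -> is_numberb Y = true.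
Proof.
  intros HG E. destruct (is_numberb Y) eqn:Hn; auto.
  destruct (nonnum_opts Y HG Hn) as [H _]. contradiction.
Qed.
Lemma good_isnum_r Y : good Y -> rightopts Y = [] -> is_numberb Y = true.
Proof. intros HG E. apply good_isnum; auto. apply (good_dic Y HG); auto. Qed.

Lemma val_num Y : is_numberb Y = true -> val Y = Ls Y /\ val Y = leftscore Y /\ val Y = rightscore Y.
Proof.
  intros H. unfold val. rewrite cool_num by auto.
  pose proof (num_form Y H) as E. rewrite E at 2 3. rewrite E. simpl. auto.
Qed.

Lemma val_nonnum Y : is_numberb Y = false -> val Y = Ls (tilde Y (temperature Y)).
Proof.
  intros H. unfold val. rewrite cool_nonnum by auto.
  destruct (Rle_dec (temperature Y) (temperature Y)); [reflexivity|lra].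
Qed.

Lemma temp_ge0 Y : good Y -> 0 <= temperature Y.
Proof. intros HG. apply (cool_props Y HG). Qed.

Lemma good_cool Y t : good Y -> 0 <= t -> good (cool Y t).
Proof. intros HG Ht. apply (cool_props Y HG); auto. Qed.

Lemma cool_cases Y t : good Y ->
  (cool Y t = num (val Y) /\ (is_numberb Y = true \/ temperature Y < t)) \/
  (is_numberb Y = false /\ t <= temperature Y /\ cool Y t = tilde Y t).
Proof.
  intros HG. destruct (is_numberb Y) eqn:Hn.
  - left. split; [|auto]. rewrite cool_num by auto. rewrite (num_form Y Hn) at 1.
    f_equal. symmetry. apply val_num; auto.
  - rewrite cool_nonnum by auto. destruct (Rle_dec t (temperature Y)).
    + right; auto.
    + left. split; [|right; lra]. rewrite val_nonnum; auto.
Qed.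

Lemma at_hot Y s : good Y -> temperature Y <= s -> Ls (cool Y s) = val Y /\ Rs (cool Y s) = val Y.
Proof.
  intros HG Hs. destruct (is_numberb Y) eqn:Hn.
  - rewrite cool_num by auto. destruct (val_num Y Hn) as [E1 [E2 E3]].
    destruct (num_opts Y Hn) as [_ ER]. rewrite (Rs_nil Y ER). split; congruence.
  - rewrite cool_nonnum, val_nonnum by auto.
    destruct (cool_props Y HG) as [_ [_ [_ [_ [_ P]]]]]. destruct (P Hn) as [Eq _].
    destruct (Rle_dec s (temperature Y)).
    + assert (s = temperature Y) as -> by lra. auto.
    + rewrite Ls_num, Rs_num. auto.
Qed.

Lemma frozen_R Y t z : good Y -> is_numberb Y = false -> temperature Y < t -> In z (rightopts Y) ->
  val Y - t <= Ls (cool z t).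
Proof.
  intros HG Hn Ht Hz. rewrite val_nonnum by auto.
  destruct (cool_props Y HG) as [_ [_ [_ [_ [_ P]]]]]. destruct (P Hn) as [Eq Hm].
  destruct (Hm t ltac:(lra)) as [_ H2]. pose proof (tilde_Rs_le Y t z Hz). lra.
Qed.

Lemma frozen_L Y t z : good Y -> is_numberb Y = false -> temperature Y < t -> In z (leftopts Y) ->
  Rs (cool z t) <= val Y + t.
Proof.
  intros HG Hn Ht Hz. rewrite val_nonnum by auto.
  destruct (cool_props Y HG) as [_ [_ [_ [_ [_ P]]]]]. destruct (P Hn) as [Eq Hm].
  destruct (Hm t ltac:(lra)) as [H1 _]. pose proof (tilde_Ls_ge Y t z Hz). lra.
Qed.

Lemma hot_L Y : good Y -> is_numberb Y = false ->
  exists z, In z (leftopts Y) /\ Rs (cool z (temperature Y)) - temperature Y = val Y.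
Proof.
  intros HG Hn. destruct (nonnum_opts Y HG Hn) as [HL _].
  destruct (tilde_Ls_ex Y (temperature Y) HL) as [z [Hz E]]. exists z. split; auto.
  rewrite val_nonnum by auto. lra.
Qed.

Lemma hot_R Y : good Y -> is_numberb Y = false ->
  exists z, In z (rightopts Y) /\ Ls (cool z (temperature Y)) + temperature Y = val Y.
Proof.
  intros HG Hn. destruct (nonnum_opts Y HG Hn) as [_ HR].
  destruct (tilde_Rs_ex Y (temperature Y) HR) as [z [Hz E]]. exists z. split; auto.
  rewrite val_nonnum by auto.
  destruct (cool_props Y HG) as [_ [_ [_ [_ [_ P]]]]]. destruct (P Hn) as [Eq _]. lra.
Qed.

Lemma tilde_has_L Y t : good Y -> is_numberb Y = false -> leftopts (tilde Y t) <> [].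
Proof.
  intros HG Hn. rewrite tilde_L. intros E. apply map_eq_nil in E.
  destruct (nonnum_opts Y HG Hn); contradiction.
Qed.
Lemma tilde_has_R Y t : good Y -> is_numberb Y = false -> rightopts (tilde Y t) <> [].
Proof.
  intros HG Hn. rewrite tilde_R. intros E. apply map_eq_nil in E.
  destruct (nonnum_opts Y HG Hn); contradiction.
Qed.

Definition CL (t : R) (l : list game) : list game := map (fun x => cool x t) l.

Lemma CL_mid t l1 a l2 : CL t (l1 ++ a :: l2) = CL t l1 ++ cool a t :: CL t l2.
Proof. unfold CL. rewrite map_app. reflexivity. Qed.
Lemma CL_app t l1 l2 : CL t (l1 ++ l2) = CL t l1 ++ CL t l2.
Proof. unfold CL. rewrite map_app. reflexivity. Qed.

Lemma good_CL t l : (forall a, In a l -> good a) -> 0 <= t -> forall b, In b (CL t l) -> good b.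
Proof. intros H Ht b Hb. unfold CL in Hb. apply in_map_iff in Hb. destruct Hb as [a [<- Ha]]. apply good_cool; auto. Qed.

Lemma good_repl l1 a l2 z : (forall b, In b (l1 ++ a :: l2) -> good b) -> good z ->
  forall b, In b (l1 ++ z :: l2) -> good b.
Proof.
  intros H Hz b Hb. apply in_app_iff in Hb. destruct Hb as [Hb|[<-|Hb]]; auto;
  apply H; apply in_app_iff; simpl; tauto.
Qed.

Lemma good_rem l1 a l2 : (forall b, In b (l1 ++ a :: l2) -> good b) -> forall b, In b (l1 ++ l2) -> good b.
Proof. intros H b Hb. apply H. apply in_mid_other. auto. Qed.

Lemma all_num_CL t l : (forall a, In a l -> good a) -> (forall a, In a l -> leftopts a = []) -> CL t l = l.
Proof.
  intros Hg Hl. unfold CL. rewrite <- (map_id l) at 2. apply map_ext_in. intros a Ha.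
  apply cool_num. apply good_isnum; auto.
Qed.

Lemma all_num_val l : (forall a, In a l -> good a) -> (forall a, In a l -> leftopts a = []) ->
  sumR val l = sumR leftscore l /\ sumR val l = sumR rightscore l.
Proof.
  intros Hg Hl. split; apply sumR_ext; intros a Ha; apply val_num; apply good_isnum; auto.
Qed.

Lemma frozen_all_l t l : (forall a, In a l -> good a) -> (forall a, In a l -> leftopts (cool a t) = []) ->
  sumR leftscore (CL t l) = sumR val l.
Proof.
  intros Hg Hl. unfold CL. rewrite sumR_map. apply sumR_ext. intros a Ha.
  destruct (cool_cases a t (Hg a Ha)) as [[E _]|[Hn [_ E]]].
  - rewrite E. reflexivity.
  - exfalso. specialize (Hl a Ha). rewrite E in Hl. apply (tilde_has_L a t (Hg a Ha) Hn Hl).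
Qed.

Lemma frozen_all_r t l : (forall a, In a l -> good a) -> (forall a, In a l -> rightopts (cool a t) = []) ->
  sumR rightscore (CL t l) = sumR val l.
Proof.
  intros Hg Hl. unfold CL. rewrite sumR_map. apply sumR_ext. intros a Ha.
  destruct (cool_cases a t (Hg a Ha)) as [[E _]|[Hn [_ E]]].
  - rewrite E. reflexivity.
  - exfalso. specialize (Hl a Ha). rewrite E in Hl. apply (tilde_has_R a t (Hg a Ha) Hn Hl).
Qed.

Lemma hottest l : (forall a, In a l -> good a) -> (exists a, In a l /\ is_numberb a = false) ->
  exists l1 a l2, l = l1 ++ a :: l2 /\ is_numberb a = false /\ forall b, In b l -> temperature b <= temperature a.
Proof.
  intros Hg Hex.
  destruct (argmax (fun a => negb (is_numberb a)) temperature l) as [l1 [a [l2 [E [Hp Hm]]]]].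
  { destruct Hex as [a [Ha Hn]]. exists a. rewrite Hn. auto. }
  exists l1, a, l2. split; auto. destruct (is_numberb a) eqn:Ha; [discriminate|]. split; auto.
  intros b Hb. destruct (is_numberb b) eqn:Hb'.
  - rewrite temp_num by auto. apply temp_ge0. apply Hg. rewrite E. apply in_mid.
  - apply Hm; auto. rewrite Hb'. reflexivity.
Qed.

Lemma sum_at_hot_R s l : (forall b, In b l -> good b) -> (forall b, In b l -> temperature b <= s) ->
  sumR Rs (CL s l) = sumR val l.
Proof.
  intros Hg Hs. unfold CL. rewrite sumR_map. apply sumR_ext. intros b Hb. apply at_hot; auto.
Qed.
Lemma sum_at_hot_L s l : (forall b, In b l -> good b) -> (forall b, In b l -> temperature b <= s) ->
  sumR Ls (CL s l) = sumR val l.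
Proof.
  intros Hg Hs. unfold CL. rewrite sumR_map. apply sumR_ext. intros b Hb. apply at_hot; auto.
Qed.

Lemma exists_nonnum_l l : (forall a, In a l -> good a) -> leftopts (sumg l) <> [] ->
  exists a, In a l /\ is_numberb a = false.
Proof.
  intros Hg Hne. apply NNPP. intros Hno. apply Hne. apply sumg_left_nil. intros a Ha.
  destruct (is_numberb a) eqn:Hn.
  - apply num_opts; auto.
  - exfalso. apply Hno. eauto.
Qed.
Lemma exists_nonnum_r l : (forall a, In a l -> good a) -> rightopts (sumg l) <> [] ->
  exists a, In a l /\ is_numberb a = false.
Proof.
  intros Hg Hne. apply NNPP. intros Hno. apply Hne. apply sumg_right_nil. intros a Ha.
  destruct (is_numberb a) eqn:Hn.
  - apply num_opts; auto.
  - exfalso. apply Hno. eauto.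
Qed.

Definition claims (l : list game) (t : R) :=
  Ls (sumg (CL t l)) <= Ls (sumg l) /\ Rs (sumg (CL t l)) - t <= Rs (sumg l) /\
  Ls (sumg l) <= Ls (sumg (CL t l)) + t /\ Rs (sumg l) <= Rs (sumg (CL t l)).

Lemma main_ind n : forall l, (tsize l < n)%nat -> (forall a, In a l -> good a) -> forall t, 0 <= t -> claims l t.
Proof.
  induction n; intros l Hn Hg t Ht; [lia|].
  assert (IH : forall l1 a l2 z, l = l1 ++ a :: l2 -> (In z (leftopts a) \/ In z (rightopts a)) ->
            forall s, 0 <= s -> claims (l1 ++ z :: l2) s).
  { intros l1 a l2 z E Hz s Hs. subst l. apply IHn; auto.
    - rewrite tsize_app in *. destruct Hz as [Hz|Hz];
        [pose proof (size_left _ _ Hz)|pose proof (size_right _ _ Hz)]; lia.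
    - apply (good_repl l1 a l2 z Hg). destruct Hz as [Hz|Hz];
        [exact (good_l a z (Hg a (in_mid a l1 l2)) Hz)|exact (good_r a z (Hg a (in_mid a l1 l2)) Hz)]. }
  assert (HgC : forall s, 0 <= s -> forall b, In b (CL s l) -> good b) by (intros; eapply good_CL; eauto).
  unfold claims. split; [|split; [|split]].
  -
    destruct (nil_or_in (leftopts (sumg (CL t l)))) as [E|[x0 Hx0]].
    + rewrite (Ls_nil _ E), sumg_ls.
      rewrite (frozen_all_l t l Hg) by (intros a Ha; apply (proj1 (sumg_left_nil (CL t l)) E); unfold CL; apply (in_map (fun x => cool x t)); auto).
      destruct (nil_or_in (leftopts (sumg l))) as [E2|[y0 Hy0]].
      * rewrite (Ls_nil _ E2), sumg_ls. rewrite (proj1 (all_num_val l Hg (proj1 (sumg_left_nil l) E2))). lra.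
      * destruct (hottest l Hg (exists_nonnum_l l Hg (in_nonnil _ _ Hy0))) as [l1 [a [l2 [El [Hna Hmax]]]]].
        set (s := temperature a).
        assert (Hs : 0 <= s) by (apply temp_ge0; apply Hg; rewrite El; apply in_mid).
        destruct (hot_L a (Hg a ltac:(rewrite El; apply in_mid)) Hna) as [z [Hz Ez]]. fold s in Ez.
        destruct (IH l1 a l2 z El (or_introl Hz) s Hs) as [_ [B2 _]].
        pose proof (Ls_ge (sumg l) (sumg (l1 ++ z :: l2)) ltac:(rewrite El; apply sumg_left_opt; auto)) as G1.
        pose proof (Rs_sumg_ge (CL s (l1 ++ z :: l2)) ltac:(apply good_CL; auto; apply (good_repl l1 a l2 z); [rewrite <- El; auto|exact (good_l a z (Hg a ltac:(rewrite El; apply in_mid)) Hz)])) as G2.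
        rewrite CL_mid, sumR_app, <- CL_app in G2.
        rewrite (sum_at_hot_R s (l1 ++ l2)) in G2.
        2: { apply good_rem with a; rewrite <- El; auto. }
        2: { intros b Hb. apply Hmax. rewrite El. apply in_mid_other; auto. }
        rewrite CL_mid in *. rewrite El in G1. rewrite El, sumR_app. lra.
    + destruct (Ls_ex _ (in_nonnil _ _ Hx0)) as [x [Hx Ex]]. rewrite Ex.
      apply in_sumg_left in Hx. destruct Hx as [m1 [b [m2 [b' [Em [Hb' ->]]]]]].
      destruct (map_decomp _ _ _ _ _ Em) as [l1 [a [l2 [El [E1 [E2 E3]]]]]].
      assert (Ha : good a) by (apply Hg; rewrite El; apply in_mid).
      destruct (cool_cases a t Ha) as [[Ec _]|[Hna [Hta Ec]]].
      * exfalso. rewrite <- E2, Ec in Hb'. simpl in Hb'. exact Hb'.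
      * rewrite <- E2, Ec, tilde_L in Hb'. apply in_map_iff in Hb'. destruct Hb' as [z [<- Hz]].
        rewrite Rs_sum_shift. subst m1 m2.
        destruct (IH l1 a l2 z El (or_introl Hz) t Ht) as [_ [B2 _]].
        rewrite CL_mid in B2. unfold CL in B2.
        pose proof (Ls_ge (sumg l) (sumg (l1 ++ z :: l2)) ltac:(rewrite El; apply sumg_left_opt; auto)).
        lra.
  -
    destruct (nil_or_in (rightopts (sumg l))) as [E|[x0 Hx0]].
    + assert (forall a, In a l -> leftopts a = []) as Hl.
      { intros a Ha. apply (good_dic a (Hg a Ha)). apply (proj1 (sumg_right_nil l) E); auto. }
      rewrite (all_num_CL t l Hg Hl). lra.
    + destruct (Rs_ex _ (in_nonnil _ _ Hx0)) as [x [Hx Ex]]. rewrite Ex.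
      apply in_sumg_right in Hx. destruct Hx as [l1 [a [l2 [z [El [Hz ->]]]]]].
      assert (Ha : good a) by (apply Hg; rewrite El; apply in_mid).
      destruct (IH l1 a l2 z El (or_intror Hz) t Ht) as [A1 _].
      assert (Hna : is_numberb a = false).
      { destruct (is_numberb a) eqn:Hnn; auto. destruct (num_opts a Hnn) as [_ E]. rewrite E in Hz; destruct Hz. }
      destruct (cool_cases a t Ha) as [[Ec [Hc|Hc]]|[_ [Hta Ec]]].
      * congruence.
      * rewrite El, CL_mid, Ec, Rs_extract, Rs_shiftl.
        rewrite CL_mid, (Ls_extract (CL t l1) (cool z t) (CL t l2)) in A1.
        assert (Gz : good (cool z t)) by (apply good_cool; auto; exact (good_r a z Ha Hz)).
        assert (Gr : good (sumg (CL t l1 ++ CL t l2))).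
        { apply good_sumg. rewrite <- CL_app. apply good_CL; auto. apply good_rem with a. rewrite <- El; auto. }
        destruct (milnor_ok _ _ Gz Gr) as [_ [_ [_ [_ [D1 _]]]]].
        pose proof (frozen_R a t z Ha Hna Hc Hz). lra.
      * rewrite El, CL_mid, Ec.
        pose proof (Rs_le (sumg (CL t l1 ++ tilde a t :: CL t l2))
                          (sumg (CL t l1 ++ gplus (cool z t) (num t) :: CL t l2))) as Hr.
        rewrite Ls_sum_shift in Hr.
        assert (In (gplus (cool z t) (num t)) (rightopts (tilde a t))) as Hin.
        { rewrite tilde_R. apply in_map_iff. eauto. }
        specialize (Hr (sumg_right_opt _ _ _ _ Hin)).
        rewrite CL_mid in A1. lra.
  -
    destruct (nil_or_in (leftopts (sumg l))) as [E|[x0 Hx0]].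
    + assert (forall a, In a l -> leftopts a = []) as Hl by (apply sumg_left_nil; auto).
      rewrite (all_num_CL t l Hg Hl). lra.
    + destruct (Ls_ex _ (in_nonnil _ _ Hx0)) as [x [Hx Ex]]. rewrite Ex.
      apply in_sumg_left in Hx. destruct Hx as [l1 [a [l2 [z [El [Hz ->]]]]]].
      assert (Ha : good a) by (apply Hg; rewrite El; apply in_mid).
      destruct (IH l1 a l2 z El (or_introl Hz) t Ht) as [_ [_ [_ B1]]].
      assert (Hna : is_numberb a = false).
      { destruct (is_numberb a) eqn:Hnn; auto. destruct (num_opts a Hnn) as [E _]. rewrite E in Hz; destruct Hz. }
      destruct (cool_cases a t Ha) as [[Ec [Hc|Hc]]|[_ [Hta Ec]]].
      * congruence.
      * rewrite El, CL_mid, Ec, Ls_extract, Ls_shiftl.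
        rewrite CL_mid, (Rs_extract (CL t l1) (cool z t) (CL t l2)) in B1.
        assert (Gz : good (cool z t)) by (apply good_cool; auto; exact (good_l a z Ha Hz)).
        assert (Gr : good (sumg (CL t l1 ++ CL t l2))).
        { apply good_sumg. rewrite <- CL_app. apply good_CL; auto. apply good_rem with a. rewrite <- El; auto. }
        destruct (milnor_ok _ _ Gz Gr) as [_ [_ [B2' _]]].
        pose proof (frozen_L a t z Ha Hna Hc Hz). lra.
      * rewrite El, CL_mid, Ec.
        pose proof (Ls_ge (sumg (CL t l1 ++ tilde a t :: CL t l2))
                          (sumg (CL t l1 ++ gplus (cool z t) (num (-t)) :: CL t l2))) as Hr.
        rewrite Rs_sum_shift in Hr.
        assert (In (gplus (cool z t) (num (-t))) (leftopts (tilde a t))) as Hin.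
        { rewrite tilde_L. apply in_map_iff. eauto. }
        specialize (Hr (sumg_left_opt _ _ _ _ Hin)).
        rewrite CL_mid in B1. lra.
  -
    destruct (nil_or_in (rightopts (sumg (CL t l)))) as [E|[x0 Hx0]].
    + rewrite (Rs_nil _ E), sumg_rs.
      rewrite (frozen_all_r t l Hg) by (intros a Ha; apply (proj1 (sumg_right_nil (CL t l)) E); unfold CL; apply (in_map (fun x => cool x t)); auto).
      destruct (nil_or_in (rightopts (sumg l))) as [E2|[y0 Hy0]].
      * rewrite (Rs_nil _ E2), sumg_rs.
        assert (forall a, In a l -> leftopts a = []) as Hl.
        { intros a Ha. apply (good_dic a (Hg a Ha)). apply (proj1 (sumg_right_nil l) E2); auto. }
        rewrite (proj2 (all_num_val l Hg Hl)). lra.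
      * destruct (hottest l Hg (exists_nonnum_r l Hg (in_nonnil _ _ Hy0))) as [l1 [a [l2 [El [Hna Hmax]]]]].
        set (s := temperature a).
        assert (Hs : 0 <= s) by (apply temp_ge0; apply Hg; rewrite El; apply in_mid).
        destruct (hot_R a (Hg a ltac:(rewrite El; apply in_mid)) Hna) as [z [Hz Ez]]. fold s in Ez.
        destruct (IH l1 a l2 z El (or_intror Hz) s Hs) as [_ [_ [A2 _]]].
        pose proof (Rs_le (sumg l) (sumg (l1 ++ z :: l2)) ltac:(rewrite El; apply sumg_right_opt; auto)) as G1.
        pose proof (Ls_sumg_le (CL s (l1 ++ z :: l2)) ltac:(apply good_CL; auto; apply (good_repl l1 a l2 z); [rewrite <- El; auto|exact (good_r a z (Hg a ltac:(rewrite El; apply in_mid)) Hz)])) as G2.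
        rewrite CL_mid, sumR_app, <- CL_app in G2.
        rewrite (sum_at_hot_L s (l1 ++ l2)) in G2.
        2: { apply good_rem with a; rewrite <- El; auto. }
        2: { intros b Hb. apply Hmax. rewrite El. apply in_mid_other; auto. }
        rewrite CL_mid in *. rewrite El in G1. rewrite El, sumR_app. lra.
    + destruct (Rs_ex _ (in_nonnil _ _ Hx0)) as [x [Hx Ex]]. rewrite Ex.
      apply in_sumg_right in Hx. destruct Hx as [m1 [b [m2 [b' [Em [Hb' ->]]]]]].
      destruct (map_decomp _ _ _ _ _ Em) as [l1 [a [l2 [El [E1 [E2 E3]]]]]].
      assert (Ha : good a) by (apply Hg; rewrite El; apply in_mid).
      destruct (cool_cases a t Ha) as [[Ec _]|[Hna [Hta Ec]]].
      * exfalso. rewrite <- E2, Ec in Hb'. simpl in Hb'. exact Hb'.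
      * rewrite <- E2, Ec, tilde_R in Hb'. apply in_map_iff in Hb'. destruct Hb' as [z [<- Hz]].
        rewrite Ls_sum_shift. subst m1 m2.
        destruct (IH l1 a l2 z El (or_intror Hz) t Ht) as [_ [_ [A2 _]]].
        rewrite CL_mid in A2. unfold CL in A2.
        pose proof (Rs_le (sumg l) (sumg (l1 ++ z :: l2)) ltac:(rewrite El; apply sumg_right_opt; auto)).
        lra.
Qed.

Lemma main_claims l t : (forall a, In a l -> good a) -> 0 <= t -> claims l t.
Proof. intros. apply (main_ind (S (tsize l))); auto. Qed.

Lemma cool_hot G t : good G -> temperature G < t -> cool G t = num (val G).
Proof.
  intros HG Ht. destruct (cool_cases G t HG) as [[E _]|[_ [Hle _]]]; [exact E|lra].
Qed.

Lemma CL_repeat G t n : good G -> temperature G < t -> CL t (repeat G n) = repeat (num (val G)) n.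
Proof.
  intros HG Ht. induction n; simpl; [reflexivity|]. unfold CL in *. simpl. rewrite IHn, cool_hot; auto.
Qed.

Lemma Ls_repeat_num v n : Ls (sumg (repeat (num v) n)) = INR n * v.
Proof.
  rewrite Ls_nil.
  - rewrite sumg_ls. induction n; simpl; [unfold sumR; simpl; lra|].
    unfold sumR in *; simpl. rewrite IHn. destruct n; simpl; lra.
  - apply sumg_left_nil. intros a Ha. apply repeat_spec in Ha. subst. reflexivity.
Qed.

Lemma inv_lim : is_lim_seq (fun n => / INR (S n)) 0.
Proof.
  pose proof (is_lim_seq_inv INR p_infty is_lim_seq_INR ltac:(discriminate)) as H.
  simpl in H. apply is_lim_seq_incr_1 in H. exact H.
Qed.

Lemma mean_val G : good G -> mean G = val G.
Proof.
  intros HG. set (t := temperature G + 1). set (v := val G).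
  assert (Ht : temperature G < t) by (unfold t; lra).
  assert (Ht0 : 0 <= t) by (pose proof (temp_ge0 G HG); unfold t; lra).
  assert (B : forall n, INR n * v <= Ls (gtimes n G) <= INR n * v + t).
  { intros n. rewrite gtimes_sumg.
    destruct (main_claims (repeat G n) t ltac:(intros a Ha; apply repeat_spec in Ha; subst; auto) Ht0)
      as [A1 [_ [A2 _]]].
    rewrite CL_repeat in A1, A2 by auto. rewrite Ls_repeat_num in A1, A2. fold v in A1, A2. lra. }
  assert (L : is_lim_seq (fun n => Ls (gtimes n G) / INR n) v).
  { apply is_lim_seq_incr_1.
    apply is_lim_seq_le_le with (u := fun _ => v) (w := fun n => v + t * / INR (S n)).
    - intros n. destruct (B (S n)) as [B1 B2].
      assert (0 < INR (S n)) by (apply lt_0_INR; lia).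
      split.
      + apply Rmult_le_reg_r with (INR (S n)); auto. unfold Rdiv. rewrite Rmult_assoc, Rinv_l by lra. lra.
      + apply Rmult_le_reg_r with (INR (S n)); auto. unfold Rdiv. rewrite Rmult_assoc, Rinv_l by lra.
        rewrite Rmult_plus_distr_r, Rmult_assoc, Rinv_l by lra. lra.
    - apply is_lim_seq_const.
    - replace (Finite v) with (Finite (v + t * 0)) by (f_equal; ring).
      apply is_lim_seq_plus'; [apply is_lim_seq_const|].
      pose proof (is_lim_seq_scal_l _ t _ inv_lim) as H. simpl in H. exact H. }
  unfold mean. rewrite (is_lim_seq_unique _ _ L). reflexivity.
Qed.

Lemma single_claims G t : good G -> temperature G < t ->
  val G <= Ls G /\ val G - t <= Rs G /\ Ls G <= val G + t /\ Rs G <= val G.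
Proof.
  intros HG Ht. assert (0 <= t) by (pose proof (temp_ge0 G HG); lra).
  destruct (main_claims [G] t ltac:(intros a [<-|[]]; auto) H) as [A1 [B2 [A2 B1]]].
  unfold CL in *; simpl in *. rewrite cool_hot in * by auto.
  rewrite !Ls_shift, !Rs_shift, Ls_num, Rs_num in *. lra.
Qed.

Theorem mainTheorem5 (G : game) :
  dicotic G -> nonzugzwang G -> terminals_are_numbers G ->
  mean G - temperature G <= Rs G /\ Rs G <= mean G /\
  mean G <= Ls G /\ Ls G <= mean G + temperature G.
Proof.
  intros Hd Hn Ht. pose proof (hyp_good G Hd Hn Ht) as HG.
  rewrite (mean_val G HG). set (s := temperature G).
  destruct (single_claims G (s + 1) HG ltac:(unfold s; lra)) as [A1 [_ [_ B1]]].
  split; [|split; [exact B1|split; [exact A1|]]].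
  - destruct (Rle_dec (val G - s) (Rs G)) as [|Hc]; [auto|exfalso].
    set (t := (s + (val G - Rs G)) / 2).
    destruct (single_claims G t HG ltac:(unfold t, s in *; lra)) as [_ [B2 _]]. unfold t in B2. lra.
  - destruct (Rle_dec (Ls G) (val G + s)) as [|Hc]; [auto|exfalso].
    set (t := (s + (Ls G - val G)) / 2).
    destruct (single_claims G t HG ltac:(unfold t, s in *; lra)) as [_ [_ [A2 _]]]. unfold t in A2. lra.
Qed.
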